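(* Let $f:\mathbb{R}^{3}\to\mathbb{R}$ be normal. Then for all $x,y,z\in\mathbb{R}$ and $k_{1},k_{2},k_{3}\neq0$: (a) the limits $A(k_{1},y,z)=\lim_{r\to\infty}\int_{-r}^{r}f(x,y,z)e^{-ik_{1}x}dx$, $B(x,k_{2},z)=\lim_{r\to\infty}\int_{-r}^{r}f(x,y,z)e^{-ik_{2}y}dy$, $C(x,y,k_{3})=\lim_{r\to\infty}\int_{-r}^{r}f(x,y,z)e^{-ik_{3}z}dz$ all exist, and $(y,z)\mapsto A(k_{1},y,z)$, $(x,z)\mapsto B(x,k_{2},z)$, $(x,y)\mapsto C(x,y,k_{3})$ are of moderate decrease $3$ (bounded by a constant times $|(\cdot,\cdot)|^{-3}$ for $|(\cdot,\cdot)|>1$); (b) the limits $F(k_{1},k_{2},z)=\lim_{r,s\to\infty}\int_{-r}^{r}\int_{-s}^{s}f(x,y,z)e^{-ik_{1}x}e^{-ik_{2}y}dxdy$, $G(k_{1},y,k_{3})=\lim_{r,s\to\infty}\int_{-r}^{r}\int_{-s}^{s}f(x,y,z)e^{-ik_{1}x}e^{-ik_{3}z}dxdz$, $H(x,k_{2},k_{3})=\lim_{r,s\to\infty}\int_{-r}^{r}\int_{-s}^{s}f(x,y,z)e^{-ik_{2}y}e^{-ik_{3}z}dydz$ all exist, and $z\mapsto F(k_{1},k_{2},z)$, $y\mapsto G(k_{1},y,k_{3})$, $x\mapsto H(x,k_{2},k_{3})$ are of moderate decrease (bounded by a constant times the inverse square of the variable for its absolute value $>1$); (c) $F(k_{1},k_{2},z)=\int_{-\infty}^{\infty}A(k_{1},y,z)e^{-ik_{2}y}dy$,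 and the corresponding identities hold for the other functions obtained by integrating out variables in the same way, namely $F(k_{1},k_{2},z)=\int_{-\infty}^{\infty}B(x,k_{2},z)e^{-ik_{1}x}dx$, $G(k_{1},y,k_{3})=\int_{-\infty}^{\infty}A(k_{1},y,z)e^{-ik_{3}z}dz=\int_{-\infty}^{\infty}C(x,y,k_{3})e^{-ik_{1}x}dx$, $H(x,k_{2},k_{3})=\int_{-\infty}^{\infty}B(x,k_{2},z)e^{-ik_{3}z}dz=\int_{-\infty}^{\infty}C(x,y,k_{3})e^{-ik_{2}y}dy$.
   Context: One-variable: a smooth $g:\mathbb{R}\setminus V\to\mathbb{R}$, $V$ bounded closed, is analytic at infinity if there exist $\epsilon_{1},\epsilon_{2}>0$ with $g(1/t)=\sum_{n\geq1}a_{n}t^{n}$ on $(0,\epsilon_{1})$ and $g(1/t)=\sum_{n\geq1}b_{n}t^{n}$ on $(-\epsilon_{2},0)$, real coefficients, both series absolutely convergent there. A one-variable function is of moderate decrease if $|g(t)|\leq C/t^{2}$ for $|t|>1$. Two variables: for smooth $h:\mathbb{R}^{2}\setminus W\to\mathbb{R}$, $W$ closed bounded: very moderate decrease means $|h(u,v)|\leq C/|(u,v)|$ for $|(u,v)|>1$; moderate decrease $n$ means $|h|\leq C/|(u,v)|^{n}$ for $|(u,v)|>1$ (moderate decrease means $n=2$). With fibres $h_{u}(v)=h(u,v)$, $h_{v}(u)=h(u,v)$, $h$ is normal if (i) every $h_{u}$ is analytic at infinity; (ii) every $h_{v}$ is analytic at infinity; (iii) $h$ is of very moderate decrease; (iv)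 $\partial h/\partial u$, $\partial h/\partial v$ are of moderate decrease; (v) there is a uniform bound on the number of zeros of $h_{u},(h_{u})',(h_{u})'',h_{v},(h_{v})',(h_{v})''$. Three variables: smooth $f:\mathbb{R}^{3}\to\mathbb{R}$ is of very moderate decrease if $|f(x,y,z)|\leq C/|(x,y,z)|$ for $|(x,y,z)|>1$, of moderate decrease $n$ ($n\geq2$) if $|f|\leq C/|(x,y,z)|^{n}$ there. Fibres: $f_{x}(y,z)=f(x,y,z)$ etc., and $f_{x,y}(z)=f(x,y,z)$, $f_{x,z}(y)$, $f_{y,z}(x)$ similarly, with derivatives in the free variable. $f$ is normal if: (i) for every $x$, $f_{x}(y,z)$ is normal; (ii) for every $y$, $f_{y}(x,z)$ is normal; (iii) for every $z$, $f_{z}(x,y)$ is normal; (iv) $f$ is of very moderate decrease; (v) for $i+j+k\geq1$, $\frac{\partial^{i+j+k}f}{\partial x^{i}\partial y^{j}\partial z^{k}}$ is of moderate decrease $i+j+k+1$; (vi) there is a uniform bound on the number of zeros of $f_{x,y}$ and its first four derivatives, and similarly for $f_{x,z}$, $f_{y,z}$. *)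

(* Defs.v *)
From Stdlib Require Import Reals List.
From Coquelicot Require Import Coquelicot.
Open Scope R_scope.

Definition norm2 (u v : R) : R := sqrt (u ^ 2 + v ^ 2).
Definition norm3 (x y z : R) : R := sqrt (x ^ 2 + y ^ 2 + z ^ 2).

Inductive dir3 := dX | dY | dZ.
Inductive dir2 := dU | dV.

Definition pd3 (d : dir3) (g : R -> R -> R -> R) : R -> R -> R -> R :=
  match d with
  | dX => fun x y z => Derive (fun t => g t y z) x
  | dY => fun x y z => Derive (fun t => g x t z) y
  | dZ => fun x y z => Derive (fun t => g x y t) z
  end.
Definition ex_pd3 (d : dir3) (g : R -> R -> R -> R) (x y z : R) : Prop :=
  match d with
  | dX => ex_derive (fun t => g t y z) x
  | dY => ex_derive (fun t => g x t z) y
  | dZ => ex_derive (fun t => g x y t) z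
  end.
Definition pdl3 (l : list dir3) (g : R -> R -> R -> R) : R -> R -> R -> R :=
  fold_right pd3 g l.

Definition pd2 (d : dir2) (h : R -> R -> R) : R -> R -> R :=
  match d with
  | dU => fun u v => Derive (fun t => h t v) u
  | dV => fun u v => Derive (fun t => h u t) v
  end.
Definition ex_pd2 (d : dir2) (h : R -> R -> R) (u v : R) : Prop :=
  match d with
  | dU => ex_derive (fun t => h t v) u
  | dV => ex_derive (fun t => h u t) v
  end.
Definition pdl2 (l : list dir2) (h : R -> R -> R) : R -> R -> R :=
  fold_right pd2 h l.

Definition smooth3 (f : R -> R -> R -> R) : Prop :=
  forall l : list dir3,
    (forall d x y z, ex_pd3 d (pdl3 l f) x y z) /\
    (forall p : R * R * R,
        continuous (fun q : R * R * R => pdl3 l f (fst (fst q)) (snd (fst q)) (snd q)) p).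

Definition smooth2 (h : R -> R -> R) : Prop :=
  forall l : list dir2,
    (forall d u v, ex_pd2 d (pdl2 l h) u v) /\
    (forall p : R * R,
        continuous (fun q : R * R => pdl2 l h (fst q) (snd q)) p).

(* analytic at infinity (for a function defined on all of R, i.e. V = empty):
   g(1/t) = sum_{n>=1} a_n t^n on (0,e1), g(1/t) = sum_{n>=1} b_n t^n on (-e2,0),
   both series absolutely convergent there. *)
Definition analytic_at_infinity (g : R -> R) : Prop :=
  exists e1 e2 : R, 0 < e1 /\ 0 < e2 /\
  exists a b : nat -> R,
    (forall t, 0 < t < e1 ->
       ex_series (fun n => Rabs (a (S n) * t ^ S n)) /\
       is_series (fun n => a (S n) * t ^ S n) (g (/ t))) /\
    (forall t, - e2 < t < 0 ->
       ex_series (fun n => Rabs (b (S n) * t ^ S n)) /\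
       is_series (fun n => b (S n) * t ^ S n) (g (/ t))).

Definition moderate_decrease1 (g : R -> R) : Prop :=
  exists K : R, forall t, 1 < Rabs t -> Rabs (g t) <= K / t ^ 2.

Definition zeros_le (g : R -> R) (N : nat) : Prop :=
  forall l : list R, NoDup l -> (forall t, In t l -> g t = 0) -> (length l <= N)%nat.

Definition very_moderate_decrease2 (h : R -> R -> R) : Prop :=
  exists K : R, forall u v, 1 < norm2 u v -> Rabs (h u v) <= K / norm2 u v.
Definition moderate_decrease2 (n : nat) (h : R -> R -> R) : Prop :=
  exists K : R, forall u v, 1 < norm2 u v -> Rabs (h u v) <= K / norm2 u v ^ n.

Definition normal2 (h : R -> R -> R) : Prop :=
  smooth2 h /\
  (forall u, analytic_at_infinity (fun v => h u v)) /\
  (forall v, analytic_at_infinity (fun u => h u v)) /\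
  very_moderate_decrease2 h /\
  moderate_decrease2 2 (pd2 dU h) /\
  moderate_decrease2 2 (pd2 dV h) /\
  (exists N : nat, forall u v (n : nat), (n <= 2)%nat ->
     zeros_le (Derive_n (fun t => h u t) n) N /\
     zeros_le (Derive_n (fun t => h t v) n) N).

Definition very_moderate_decrease3 (f : R -> R -> R -> R) : Prop :=
  exists K : R, forall x y z, 1 < norm3 x y z -> Rabs (f x y z) <= K / norm3 x y z.
Definition moderate_decrease3 (n : nat) (f : R -> R -> R -> R) : Prop :=
  exists K : R, forall x y z, 1 < norm3 x y z -> Rabs (f x y z) <= K / norm3 x y z ^ n.

Definition pdijk (i j k : nat) (f : R -> R -> R -> R) : R -> R -> R -> R :=
  pdl3 (repeat dX i ++ repeat dY j ++ repeat dZ k) f.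

Definition normal3 (f : R -> R -> R -> R) : Prop :=
  smooth3 f /\
  (forall x, normal2 (fun y z => f x y z)) /\
  (forall y, normal2 (fun x z => f x y z)) /\
  (forall z, normal2 (fun x y => f x y z)) /\
  very_moderate_decrease3 f /\
  (forall i j k : nat, (1 <= i + j + k)%nat ->
     moderate_decrease3 (i + j + k + 1) (pdijk i j k f)) /\
  (exists N : nat, forall a b (n : nat), (n <= 4)%nat ->
     zeros_le (Derive_n (fun z => f a b z) n) N /\
     zeros_le (Derive_n (fun y => f a y b) n) N /\
     zeros_le (Derive_n (fun x => f x a b) n) N).

Definition CV : CompleteNormedModule R_AbsRing := C_R_CompleteNormedModule.

Definition cexpi (t : R) : C := (cos t, sin t).

Definition sym_lim (g : R -> C) (l : C) : Prop :=
  filterlim (fun r : R => @RInt CV g (- r) r) (Rbar_locally p_infty) (locally (l : CV)).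

Definition sym_lim2 (g : R -> R -> C) (l : C) : Prop :=
  filterlim (fun rs : R * R =>
      @RInt CV (fun b => @RInt CV (fun a => g a b) (- snd rs) (snd rs)) (- fst rs) (fst rs))
    (filter_prod (Rbar_locally p_infty) (Rbar_locally p_infty)) (locally (l : CV)).

Definition improper_int (g : R -> C) (l : C) : Prop :=
  @is_RInt_gen CV g (Rbar_locally m_infty) (Rbar_locally p_infty) l.

Definition moderate_decreaseC1 (g : R -> C) : Prop :=
  exists K : R, forall t, 1 < Rabs t -> Cmod (g t) <= K / t ^ 2.
Definition moderate_decreaseC2 (n : nat) (h : R -> R -> C) : Prop :=
  exists K : R, forall u v, 1 < norm2 u v -> Cmod (h u v) <= K / norm2 u v ^ n.

(* Main.v *)
Require Import Defs.
From Stdlib Require Import Reals List Lra Lia ClassicalEpsilon.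
From Coquelicot Require Import Coquelicot.
Open Scope R_scope.


Definition E (k x : R) : C := cexpi (- (k * x)).

Lemma scal_CV (r : R) (u : C) : @scal R_Ring CV r u = Cmult (RtoC r) u.
Proof.
  destruct u as [a b]. 
  change (@scal R_Ring CV r (a,b)) with ((r*a, r*b) : C).
  unfold Cmult, RtoC. simpl.
  apply injective_projections; simpl; ring.
Qed.

Lemma norm_CV (u : CV) : norm u = Cmod u.
Proof. rewrite Cmod_norm. reflexivity. Qed.

Lemma Cmod_E k x : Cmod (E k x) = 1.
Proof.
  unfold E, cexpi, Cmod. simpl.
  assert (h := sin2_cos2 (-(k*x))). unfold Rsqr in h.
  replace (cos (- (k * x)) * (cos (- (k * x)) * 1) + sin (- (k * x)) * (sin (- (k * x)) * 1)) with 1 by lra.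
  apply sqrt_1.
Qed.

Lemma minus_CV (u v : CV) : minus u v = Cminus u v.
Proof. destruct u, v. reflexivity. Qed.
Lemma plus_CV (u v : CV) : plus u v = Cplus u v.
Proof. destruct u, v. reflexivity. Qed.
Lemma opp_CV (u : CV) : opp u = Copp u.
Proof. destruct u. reflexivity. Qed.
Lemma zero_CV : (zero : CV) = RtoC 0.
Proof. reflexivity. Qed.

Ltac cnorm := simpl; repeat (progress (unfold plus, scal, mult, opp, minus, zero, one; simpl)).
Ltac ceq := apply injective_projections; cnorm.

Lemma is_derive_E k x :
  @is_derive R_AbsRing CV (E k) x (Cmult (0, - k) (E k x)).
Proof.
  assert (H: @is_derive R_AbsRing CV
     (fun t => plus (@scal R_Ring CV (cos (-(k*t))) (1,0)) (@scal R_Ring CV (sin (-(k*t))) (0,1)))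
     x (plus (@scal R_Ring CV (k * sin (-(k*x))) (1,0)) (@scal R_Ring CV (- k * cos (-(k*x))) (0,1)))).
  { apply (@is_derive_plus R_AbsRing CV); apply (@is_derive_scal_l R_AbsRing CV); auto_derive; auto; ring. }
  eapply is_derive_ext; [|eapply filterdiff_ext_lin; [exact H|]].
  - intro t. cbv beta. unfold E, cexpi. ceq; ring.
  - intro y. cbv beta. unfold E, cexpi. ceq; ring.
Qed.


Lemma is_RInt_C_fst (h : R -> C) a b (l : C) :
  @is_RInt CV h a b l -> is_RInt (fun x => fst (h x)) a b (fst l).
Proof. intro H. exact (@is_RInt_fct_extend_fst R_NormedModule R_NormedModule h a b l H). Qed.
Lemma is_RInt_C_snd (h : R -> C) a b (l : C) :
  @is_RInt CV h a b l -> is_RInt (fun x => snd (h x)) a b (snd l).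
Proof. intro H. exact (@is_RInt_fct_extend_snd R_NormedModule R_NormedModule h a b l H). Qed.
Lemma is_RInt_C_pair (h : R -> C) a b (l : C) :
  is_RInt (fun x => fst (h x)) a b (fst l) -> is_RInt (fun x => snd (h x)) a b (snd l) ->
  @is_RInt CV h a b l.
Proof. intros H1 H2. destruct l. exact (@is_RInt_fct_extend_pair R_NormedModule R_NormedModule h a b _ _ H1 H2). Qed.

Lemma is_RInt_Cmult_l (h : R -> C) a b (l w : C) :
  @is_RInt CV h a b l -> @is_RInt CV (fun x => Cmult w (h x)) a b (Cmult w l).
Proof.
  intro H. pose proof (is_RInt_C_fst _ _ _ _ H) as H1. pose proof (is_RInt_C_snd _ _ _ _ H) as H2.
  destruct w as [w1 w2]. apply is_RInt_C_pair; simpl.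
  - apply (is_RInt_ext (fun x => minus (scal w1 (fst (h x))) (scal w2 (snd (h x))))).
    + intros; cnorm; ring.
    + replace (w1 * fst l - w2 * snd l) with (minus (scal w1 (fst l)) (scal w2 (snd l))) by (cnorm; ring).
      apply (@is_RInt_minus R_NormedModule); apply (@is_RInt_scal R_NormedModule); auto.
  - apply (is_RInt_ext (fun x => plus (scal w1 (snd (h x))) (scal w2 (fst (h x))))).
    + intros; cnorm; ring.
    + replace (w1 * snd l + w2 * fst l) with (plus (scal w1 (snd l)) (scal w2 (fst l))) by (cnorm; ring).
      apply (@is_RInt_plus R_NormedModule); apply (@is_RInt_scal R_NormedModule); auto.
Qed.

Lemma is_RInt_Cmult_r (h : R -> C) a b (l w : C) :
  @is_RInt CV h a b l -> @is_RInt CV (fun x => Cmult (h x) w) a b (Cmult l w).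
Proof.
  intro H. apply (is_RInt_ext (fun x => Cmult w (h x))). intros; apply Cmult_comm.
  rewrite Cmult_comm. apply is_RInt_Cmult_l; auto.
Qed.


Lemma is_derive_atan_sc (a x : R) : 0 < a ->
  is_derive (fun t => atan (t / a) / a) x (/ (x ^ 2 + a ^ 2)).
Proof.
  intro Ha.
  assert (H : is_derive atan (x / a) (/ (1 + (x/a) ^ 2))).
  { apply is_derive_Reals. apply derivable_pt_lim_atan. }
  assert (H2 : is_derive (fun t => atan (t / a)) x (scal (/a) (/ (1 + (x/a) ^ 2)))).
  { apply (is_derive_comp atan (fun t => t / a)). exact H. auto_derive. auto. ring. }
  apply (is_derive_ext (fun t => / a * atan (t / a))). 2: {
  replace (/ (x ^ 2 + a ^ 2)) with (/a * (scal (/a) (/ (1 + (x/a) ^ 2)))).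
  apply is_derive_scal. exact H2.
  unfold scal; simpl; unfold mult; simpl.
  assert (0 <= x^2) by nra; assert (0 <= (x/a)^2) by nra; field; split; [apply Rgt_not_eq; apply Rplus_le_lt_0_compat; [apply Rle_0_sqr|apply Rmult_lt_0_compat; lra] | lra]. }
  intros t; unfold Rdiv; apply Rmult_comm.
Qed.

Lemma pos_sq2 (x a : R) : 0 < a -> 0 < x ^ 2 + a ^ 2.
Proof. intro. apply Rplus_le_lt_0_compat. apply pow2_ge_0. apply pow_lt; auto. Qed.

Lemma is_RInt_atan (a u v : R) : 0 < a ->
  is_RInt (fun x => / (x ^ 2 + a ^ 2)) u v ((atan (v / a) - atan (u / a)) / a).
Proof.
  intro Ha.
  replace ((atan (v / a) - atan (u / a)) / a) with (minus (atan (v/a) / a) (atan (u/a) / a))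
    by (unfold minus, plus, opp; simpl; field; lra).
  apply (is_RInt_derive (fun t => atan (t / a) / a)).
  - intros; apply is_derive_atan_sc; auto.
  - intros x _. apply continuous_Rinv_comp.
    apply (continuous_plus (fun t => t^2) (fun _ => a^2)).
    apply (ex_derive_continuous (fun t => t^2)). auto_derive; auto.
    apply continuous_const.
    apply Rgt_not_eq, pos_sq2; auto.
Qed.

Lemma atan_int_bound (a u v : R) : 0 < a -> u <= v ->
  0 <= (atan (v / a) - atan (u / a)) / a <= PI / a.
Proof.
  intros Ha Huv. split.
  - apply Rmult_le_pos; [| left; apply Rinv_0_lt_compat; auto].
    destruct (Rle_lt_or_eq_dec _ _ Huv) as [h|h].
    + assert (atan (u/a) < atan (v/a)). apply atan_increasing.
      unfold Rdiv; apply Rmult_lt_compat_r; auto; apply Rinv_0_lt_compat; auto. lra.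
    + subst; lra.
  - unfold Rdiv. apply Rmult_le_compat_r. left; apply Rinv_0_lt_compat; auto.
    pose proof (atan_bound (v * /a)). pose proof (atan_bound (u * /a)). lra.
Qed.

Lemma is_derive_minv (x : R) : x <> 0 -> is_derive (fun t => - / t) x (/ x ^ 2).
Proof. intro. auto_derive; auto. field; auto. Qed.

Lemma is_RInt_invsq (u v : R) : (0 < u /\ 0 < v) \/ (u < 0 /\ v < 0) ->
  is_RInt (fun x => / x ^ 2) u v (/ u - / v).
Proof.
  intro H.
  replace (/ u - / v) with (minus (- / v) (- / u)) by (unfold minus, plus, opp; simpl; ring).
  apply (is_RInt_derive (fun t => - / t)).
  - intros x Hx. apply is_derive_minv.
    destruct H as [[]|[]]; unfold Rmin, Rmax in Hx; destruct (Rle_dec u v); lra.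
  - intros x Hx. assert (x <> 0).
    { destruct H as [[]|[]]; unfold Rmin, Rmax in Hx; destruct (Rle_dec u v); lra. }
    apply continuous_Rinv_comp. apply (ex_derive_continuous (fun t => t^2)). auto_derive; auto.
    apply pow_nonzero; auto.
Qed.

Lemma norm_RInt_atan (h : R -> C) (u v a M : R) (l : C) : 0 < a -> u <= v -> 0 <= M ->
  @is_RInt CV h u v l -> (forall x, u <= x <= v -> Cmod (h x) <= M / (x ^ 2 + a ^ 2)) ->
  Cmod l <= M * PI / a.
Proof.
  intros Ha Huv HM Hl Hb.
  rewrite <- norm_CV.
  eapply Rle_trans.
  apply (@norm_RInt_le CV h (fun x => scal M (/ (x^2 + a^2))) u v l (scal M ((atan (v / a) - atan (u / a)) / a)) Huv).
  intros x Hx. rewrite norm_CV. unfold scal; simpl; unfold mult; simpl. apply Hb; auto.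
  exact Hl. apply (@is_RInt_scal R_NormedModule (fun x => /(x^2+a^2))). apply is_RInt_atan; auto.
  unfold scal; simpl; unfold mult; simpl.
  pose proof (atan_int_bound a u v Ha Huv).
  unfold Rdiv in *. rewrite Rmult_assoc. apply Rmult_le_compat_l; auto.
  destruct H. 
  apply Rle_trans with ((atan (v * / a) - atan (u * / a)) * / a); [right; reflexivity|].
  apply Rmult_le_compat_r. left; apply Rinv_0_lt_compat; auto.
  pose proof (atan_bound (v * /a)). pose proof (atan_bound (u * /a)). lra.
Qed.

Lemma norm_RInt_invsq (h : R -> C) (u v s M : R) (l : C) : 0 < s -> u <= v -> 0 <= M ->
  ((s <= u) \/ (v <= - s)) ->
  @is_RInt CV h u v l -> (forall x, u <= x <= v -> Cmod (h x) <= M / (x ^ 2)) ->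
  Cmod l <= M / s.
Proof.
  intros Hs Huv HM Hsu Hl Hb.
  rewrite <- norm_CV.
  eapply Rle_trans.
  apply (@norm_RInt_le CV h (fun x => scal M (/ (x^2))) u v l (scal M (/ u - / v)) Huv).
  intros x Hx. rewrite norm_CV. unfold scal; simpl; unfold mult; simpl. apply Hb; auto.
  exact Hl. apply (@is_RInt_scal R_NormedModule (fun x => /(x^2))). apply is_RInt_invsq. lra.
  unfold scal; simpl; unfold mult; simpl. unfold Rdiv. apply Rmult_le_compat_l; auto.
  destruct Hsu.
  - assert (/ v > 0). apply Rinv_0_lt_compat; lra.
    assert (/ u <= / s). apply Rinv_le_contravar; lra. lra.
  - assert (/ u < 0). apply Rinv_lt_0_compat; lra.
    assert (/ (- v) <= / s). apply Rinv_le_contravar; lra.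
    replace (/ (- v)) with (- / v) in H1 by (field; lra). lra.
Qed.


Definition ck (k : R) : C := (0, / k).
Definition FE (phi : R -> R) (k : R) : R -> C := fun x => Cmult (RtoC (phi x)) (E k x).

Lemma Cmod_ck k : k <> 0 -> Cmod (ck k) = / Rabs k.
Proof.
  intro Hk. unfold ck, Cmod; simpl.
  replace (0 * (0 * 1) + / k * (/ k * 1)) with (Rsqr (/ k)) by (unfold Rsqr; ring).
  rewrite sqrt_Rsqr_abs. apply Rabs_inv.
Qed.

Lemma Cmod_FE phi k x : Cmod (FE phi k x) = Rabs (phi x).
Proof. unfold FE. rewrite Cmod_mult, Cmod_E, Cmod_R. ring. Qed.

Lemma continuous_E k x : @continuous R_UniformSpace CV (E k) x.
Proof. apply (@ex_derive_continuous R_AbsRing CV). eexists. apply is_derive_E. Qed.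

Lemma is_derive_E' k x :
  @is_derive R_AbsRing CV (fun t => Cmult (0, - k) (E k t)) x (Cmult (0, - k) (Cmult (0, - k) (E k x))).
Proof.
  assert (H: @is_derive R_AbsRing CV
     (fun t => plus (@scal R_Ring CV (k * sin (-(k*t))) (1,0)) (@scal R_Ring CV (- k * cos (-(k*t))) (0,1)))
     x (plus (@scal R_Ring CV (- k * k * cos (-(k*x))) (1,0)) (@scal R_Ring CV (- k * k * sin (-(k*x))) (0,1)))).
  { apply (@is_derive_plus R_AbsRing CV); apply (@is_derive_scal_l R_AbsRing CV); auto_derive; auto; ring. }
  eapply is_derive_ext; [|eapply filterdiff_ext_lin; [exact H|]].
  - intro t. cbv beta. unfold E, cexpi. ceq; ring.
  - intro y. cbv beta. unfold E, cexpi. ceq; ring.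
Qed.

Lemma continuous_E' k x : @continuous R_UniformSpace CV (fun t => Cmult (0, - k) (E k t)) x.
Proof. apply (@ex_derive_continuous R_AbsRing CV). eexists. apply is_derive_E'. Qed.

Lemma continuous_FE phi k x : continuous phi x -> @continuous R_UniformSpace CV (FE phi k) x.
Proof.
  intro H. apply (continuous_ext (fun t => @scal R_Ring CV (phi t) (E k t))).
  intro t. rewrite scal_CV. reflexivity.
  apply (@continuous_scal R_UniformSpace R_AbsRing CV). exact H. apply continuous_E.
Qed.

Lemma ex_RInt_FE phi k u v : (forall x, continuous phi x) -> @ex_RInt CV (FE phi k) u v.
Proof. intro H. apply ex_RInt_continuous. intros; apply continuous_FE; auto. Qed.

Lemma IBP (phi dphi : R -> R) (k u v : R) : k <> 0 ->
  (forall x, is_derive phi x (dphi x)) -> (forall x, continuous dphi x) ->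
  @is_RInt CV (FE phi k) u v
    (Cmult (ck k) (Cminus (Cminus (FE phi k v) (FE phi k u)) (@RInt CV (FE dphi k) u v))).
Proof.
  intros Hk Hd Hc.
  assert (H1 : @is_RInt CV (fun t => @scal R_Ring CV (dphi t) (E k t)) u v (@RInt CV (FE dphi k) u v)).
  { apply (is_RInt_ext (FE dphi k)). intros; rewrite scal_CV; reflexivity.
    apply (@RInt_correct CV). apply ex_RInt_FE; auto. }
  pose proof (@is_RInt_scal_derive_r CV phi (E k) dphi (fun t => Cmult (0, - k) (E k t)) u v _
     (fun t _ => Hd t) (fun t _ => is_derive_E k t) (fun t _ => Hc t) (fun t _ => continuous_E' k t) H1) as H2.
  apply (is_RInt_Cmult_l _ _ _ _ (ck k)) in H2.
  repeat rewrite minus_CV in H2. repeat rewrite (scal_CV (phi u)) in H2. repeat rewrite (scal_CV (phi v)) in H2.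
  eapply is_RInt_ext; [|exact H2].
  intros x _. unfold FE, ck, RtoC. destruct (E k x) as [e1 e2]. ceq; field; auto.
Qed.


Lemma Cmod_minus_le (a b : C) : Cmod (Cminus a b) <= Cmod a + Cmod b.
Proof. unfold Cminus. eapply Rle_trans. apply Cmod_triangle. rewrite Cmod_opp. lra. Qed.

Lemma Cmod_minus_sym (a b : C) : Cmod (Cminus a b) = Cmod (Cminus b a).
Proof. replace (Cminus a b) with (Copp (Cminus b a)) by ring. apply Cmod_opp. Qed.

Lemma le_eps (a b : R) : (forall eps, 0 < eps -> a <= b + eps) -> a <= b.
Proof.
  intro H. destruct (Rle_or_lt a b); auto.
  specialize (H ((a - b)/2) ltac:(lra)). lra.
Qed.

Lemma le_inv_s (a b D : R) : 0 <= D -> (forall s, 1 <= s -> a <= b + D / s) -> a <= b.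
Proof.
  intros HD H. apply le_eps. intros eps Heps.
  specialize (H (Rmax 1 (D / eps + 1)) (Rmax_l _ _)).
  eapply Rle_trans; [exact H|]. apply Rplus_le_compat_l.
  assert (Hm : D / eps + 1 <= Rmax 1 (D / eps + 1)) by apply Rmax_r.
  assert (Hp : 0 < Rmax 1 (D / eps + 1)) by (eapply Rlt_le_trans; [|apply Rmax_l]; lra).
  unfold Rdiv. apply Rle_trans with (D * / (D / eps)) ; [|].
  - destruct (Req_dec D 0). subst; rewrite !Rmult_0_l; lra.
    apply Rmult_le_compat_l; auto. apply Rinv_le_contravar. 
    apply Rdiv_lt_0_compat; lra. lra.
  - destruct (Req_dec D 0). subst; rewrite !Rmult_0_l; lra.
    right. field. split; lra.
Qed.

Lemma lim_Cmod_le {T} (F : (T -> Prop) -> Prop) {FF : ProperFilter F} (h : T -> C) (l v : C) (Cc : R) :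
  filterlim h F (@locally CV l) -> F (fun r => Cmod (Cminus (h r) v) <= Cc) -> Cmod (Cminus l v) <= Cc.
Proof.
  intros Hl Hb. apply le_eps. intros eps Heps.
  assert (Hnf : 0 < norm_factor (V := CV)) by apply norm_factor_gt_0.
  assert (Hp : 0 < eps / norm_factor (V:=CV)) by (apply Rdiv_lt_0_compat; auto).
  pose proof (Hl _ (locally_ball l (mkposreal _ Hp))) as H1.
  unfold filtermap in H1. destruct (@Hierarchy.filter_ex _ F FF _ (filter_and _ _ H1 Hb)) as [r [Hr1 Hr2]].
  apply (@norm_compat2 R_AbsRing CV) in Hr1. simpl in Hr1. rewrite norm_CV, minus_CV in Hr1.
  replace (norm_factor * (eps / norm_factor)) with eps in Hr1 by (field; lra).
  replace (Cminus l v) with (Cplus (Copp (Cminus (h r) l)) (Cminus (h r) v)) by ring.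
  eapply Rle_trans. apply Cmod_triangle. rewrite Cmod_opp. lra.
Qed.


Definition TailHyp (phi0 phi1 : R -> R) (R0 K : R) : Prop :=
  0 < R0 /\ 0 <= K /\ (forall x, is_derive phi0 x (phi1 x)) /\ (forall x, continuous phi1 x) /\
  (forall x, R0 <= Rabs x -> Rabs (phi0 x) <= K / Rabs x /\ Rabs (phi1 x) <= K / x ^ 2).

Lemma cont_of_derive (phi dphi : R -> R) : (forall x, is_derive phi x (dphi x)) -> forall x, continuous phi x.
Proof. intros H x. apply (@ex_derive_continuous R_AbsRing R_NormedModule). eexists; apply H. Qed.

Lemma RInt_IBP (phi dphi : R -> R) (k u v : R) : k <> 0 ->
  (forall x, is_derive phi x (dphi x)) -> (forall x, continuous dphi x) ->
  @RInt CV (FE phi k) u v =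
    Cmult (ck k) (Cminus (Cminus (FE phi k v) (FE phi k u)) (@RInt CV (FE dphi k) u v)).
Proof. intros. apply is_RInt_unique. apply IBP; auto. Qed.

Lemma seg_bound (phi0 phi1 : R -> R) (R0 K k s u v : R) : TailHyp phi0 phi1 R0 K -> k <> 0 ->
  R0 <= s -> u <= v -> (s <= u \/ v <= - s) ->
  Cmod (@RInt CV (FE phi0 k) u v) <= 3 * K / (Rabs k * s).
Proof.
  intros [HR0 [HK [Hd [Hc Hb]]]] Hk Hs Huv Hsu.
  rewrite (RInt_IBP phi0 phi1); auto.
  rewrite Cmod_mult, Cmod_ck; auto.
  assert (Hks : 0 < Rabs k) by (apply Rabs_pos_lt; auto).
  assert (Hbd : forall x, u <= x <= v -> Rabs (phi0 x) <= K / s /\ Rabs (phi1 x) <= K / x ^ 2).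
  { intros x Hx. assert (s <= Rabs x) by (unfold Rabs; destruct (Rcase_abs x); lra).
    destruct (Hb x ltac:(lra)) as [h1 h2]. split; auto.
    eapply Rle_trans; [exact h1|]. unfold Rdiv; apply Rmult_le_compat_l; auto.
    apply Rinv_le_contravar; lra. }
  assert (H3 : Cmod (@RInt CV (FE phi1 k) u v) <= K / s).
  { apply (norm_RInt_invsq (FE phi1 k) u v s K); auto; try lra.
    apply (@RInt_correct CV). apply ex_RInt_FE; auto.
    intros x Hx. rewrite Cmod_FE. apply Hbd; auto. }
  assert (H1 : Cmod (FE phi0 k v) <= K / s) by (rewrite Cmod_FE; apply Hbd; lra).
  assert (H2 : Cmod (FE phi0 k u) <= K / s) by (rewrite Cmod_FE; apply Hbd; lra).
  apply Rle_trans with (/ Rabs k * (K / s + K / s + K / s)).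
  - apply Rmult_le_compat_l. left; apply Rinv_0_lt_compat; auto.
    eapply Rle_trans. apply Cmod_minus_le. eapply Rle_trans. apply Rplus_le_compat_r. apply Cmod_minus_le. lra.
  - right. field. split; lra.
Qed.

Lemma RInt_Chasles_C (h : R -> C) a b c : @ex_RInt CV h a b -> @ex_RInt CV h b c ->
  Cplus (@RInt CV h a b) (@RInt CV h b c) = @RInt CV h a c.
Proof. intros H1 H2. rewrite <- (@RInt_Chasles CV h a b c H1 H2). symmetry; apply plus_CV. Qed.

Definition Isym (phi : R -> R) (k s : R) : C := @RInt CV (FE phi k) (- s) s.

Lemma I_diff (phi0 phi1 : R -> R) (R0 K k s s' : R) : TailHyp phi0 phi1 R0 K -> k <> 0 ->
  R0 <= s -> s <= s' -> Cmod (Cminus (Isym phi0 k s') (Isym phi0 k s)) <= 6 * K / (Rabs k * s).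
Proof.
  intros HT Hk Hs Hss.
  assert (HR0 : 0 < R0) by apply HT.
  assert (Hc0 : forall x, continuous phi0 x) by (apply (cont_of_derive _ phi1); apply HT).
  assert (Hex : forall a b, @ex_RInt CV (FE phi0 k) a b) by (intros; apply ex_RInt_FE; auto).
  unfold Isym.
  rewrite <- (RInt_Chasles_C _ (-s') (-s) s'); auto.
  rewrite <- (RInt_Chasles_C _ (-s) s s'); auto.
  replace (Cminus (Cplus (@RInt CV (FE phi0 k) (- s') (- s)) (Cplus (@RInt CV (FE phi0 k) (- s) s) (@RInt CV (FE phi0 k) s s')))
      (@RInt CV (FE phi0 k) (- s) s)) with (Cplus (@RInt CV (FE phi0 k) (- s') (- s)) (@RInt CV (FE phi0 k) s s')) by ring.
  eapply Rle_trans. apply Cmod_triangle.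
  replace (6 * K / (Rabs k * s)) with (3 * K / (Rabs k * s) + 3 * K / (Rabs k * s)) by (field; split; [lra|apply Rabs_no_R0; auto]).
  apply Rplus_le_compat.
  - apply (seg_bound phi0 phi1 R0 K k s); auto; lra.
  - apply (seg_bound phi0 phi1 R0 K k s); auto; lra.
Qed.


Lemma small_frac (A k s eps : R) : 0 <= A -> 0 < Rabs k -> 0 < eps -> A / (Rabs k * eps) < s -> 0 < s ->
  A / (Rabs k * s) < eps.
Proof.
  intros HA Hk He Hs Hs0.
  apply (Rmult_lt_reg_r (Rabs k * s)). apply Rmult_lt_0_compat; auto.
  unfold Rdiv. rewrite Rmult_assoc, Rinv_l, Rmult_1_r by (apply Rgt_not_eq, Rmult_lt_0_compat; auto).
  apply (Rmult_lt_compat_l (Rabs k * eps)) in Hs; [|apply Rmult_lt_0_compat; auto].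
  unfold Rdiv in Hs. rewrite (Rmult_comm A), <- Rmult_assoc, Rinv_r, Rmult_1_l in Hs by (apply Rgt_not_eq, Rmult_lt_0_compat; auto).
  lra.
Qed.

Lemma sym_lim_exists (phi0 phi1 : R -> R) (R0 K k : R) : TailHyp phi0 phi1 R0 K -> k <> 0 ->
  exists l, sym_lim (FE phi0 k) l.
Proof.
  intros HT Hk.
  assert (HR0 : 0 < R0) by apply HT. assert (HK : 0 <= K) by apply HT.
  assert (Hks : 0 < Rabs k) by (apply Rabs_pos_lt; auto).
  apply (@filterlim_locally_cauchy R CV (Rbar_locally p_infty) (Rbar_locally_filter _)).
  intro eps.
  exists (fun r => R0 + 6 * K / (Rabs k * eps) < r). split.
  - exists (R0 + 6 * K / (Rabs k * eps)). auto.
  - assert (Hq : 0 <= 6 * K / (Rabs k * eps)).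
    { apply Rdiv_le_0_compat. lra. apply Rmult_lt_0_compat; auto. apply cond_pos. }
    assert (Hmain : forall u v, R0 + 6 * K / (Rabs k * eps) < u -> u <= v ->
       ball (Isym phi0 k u) eps (Isym phi0 k v)).
    { intros u v Hu Huv. apply (@norm_compat1 R_AbsRing CV). rewrite norm_CV, minus_CV.
      eapply Rle_lt_trans. apply (I_diff phi0 phi1 R0 K k u v); auto; lra.
      apply small_frac; try lra; auto. apply cond_pos. }
    intros u v Hu Hv. destruct (Rle_or_lt u v).
    + apply Hmain; auto.
    + apply ball_sym. apply Hmain; auto; lra.
Qed.

Lemma sym_lim_tail (phi0 phi1 : R -> R) (R0 K k : R) (l : C) : TailHyp phi0 phi1 R0 K -> k <> 0 ->
  sym_lim (FE phi0 k) l -> forall s, R0 <= s -> Cmod (Cminus l (Isym phi0 k s)) <= 6 * K / (Rabs k * s).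
Proof.
  intros HT Hk Hl s Hs.
  apply (lim_Cmod_le (Rbar_locally p_infty) (Isym phi0 k)); auto.
  exists s. intros r Hr. apply (I_diff phi0 phi1 R0 K k s r); auto; lra.
Qed.


Definition nn (x r : R) : R := sqrt (x ^ 2 + r ^ 2).

Lemma nn_facts x r : 0 < r -> 0 < nn x r /\ nn x r ^ 2 = x ^ 2 + r ^ 2 /\ Rabs x <= nn x r /\ r <= nn x r.
Proof.
  intro Hr. unfold nn.
  assert (H0 : 0 < x ^ 2 + r ^ 2) by (apply pos_sq2; auto).
  split; [apply sqrt_lt_R0; auto|].
  split; [rewrite <- Rsqr_pow2; apply Rsqr_sqrt; lra|].
  split.
  - rewrite <- sqrt_Rsqr_abs. apply sqrt_le_1_alt. rewrite Rsqr_pow2. assert (0 <= r^2) by apply pow2_ge_0. lra.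
  - rewrite <- (sqrt_Rsqr r) at 1 by lra. apply sqrt_le_1_alt. rewrite Rsqr_pow2. assert (0 <= x^2) by apply pow2_ge_0. lra.
Qed.

Lemma div_pow_le (K n s : R) (j : nat) : 0 <= K -> 1 <= s -> s <= n -> K / n ^ (S j) <= K / s.
Proof.
  intros HK Hs Hn. unfold Rdiv. apply Rmult_le_compat_l; auto. apply Rinv_le_contravar. lra.
  induction j. simpl; lra. simpl in *. 
  apply Rle_trans with (n * 1). lra. apply Rmult_le_compat_l. lra. lra.
Qed.

Definition Bnd3Hyp (p0 p1 p2 p3 : R -> R) (r K : R) : Prop :=
  0 < r /\ 0 <= K /\ (forall x, is_derive p0 x (p1 x)) /\ (forall x, is_derive p1 x (p2 x)) /\
  (forall x, is_derive p2 x (p3 x)) /\ (forall x, continuous p3 x) /\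
  (forall x, Rabs (p0 x) <= K / nn x r /\ Rabs (p1 x) <= K / nn x r ^ 2 /\
             Rabs (p2 x) <= K / nn x r ^ 3 /\ Rabs (p3 x) <= K / nn x r ^ 4).

Lemma bdry_bound (p : R -> R) k s B : Rabs (p s) <= B -> Rabs (p (- s)) <= B ->
  Cmod (Cminus (FE p k s) (FE p k (- s))) <= 2 * B.
Proof. intros. eapply Rle_trans. apply Cmod_minus_le. rewrite !Cmod_FE. lra. Qed.

Lemma Bnd3 (p0 p1 p2 p3 : R -> R) (r K k : R) (l : C) : Bnd3Hyp p0 p1 p2 p3 r K -> k <> 0 ->
  sym_lim (FE p0 k) l -> Cmod l <= K * PI / (Rabs k ^ 3 * r ^ 3).
Proof.
  intros [Hr [HK [D0 [D1 [D2 [C3 Hb]]]]]] Hk Hl.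
  assert (Hks : 0 < Rabs k) by (apply Rabs_pos_lt; auto).
  set (a := / Rabs k).
  assert (Ha : 0 < a) by (apply Rinv_0_lt_compat; auto).
  assert (C2 : forall x, continuous p2 x) by (apply (cont_of_derive _ p3); auto).
  assert (C1 : forall x, continuous p1 x) by (apply (cont_of_derive _ p2); auto).
  assert (HT : TailHyp p0 p1 1 K).
  { split; [lra|]. split; auto. split; auto. split; auto.
    intros x Hx. destruct (nn_facts x r Hr) as [n0 [n2 [nx nr]]].
    destruct (Hb x) as [b0 [b1 _]]. split.
    - eapply Rle_trans; [exact b0|]. unfold Rdiv; apply Rmult_le_compat_l; auto.
      apply Rinv_le_contravar; lra.
    - eapply Rle_trans; [exact b1|]. unfold Rdiv; apply Rmult_le_compat_l; auto.
      apply Rinv_le_contravar. assert (0 < x ^ 2). { rewrite <- Rsqr_pow2. apply Rlt_0_sqr. intro; subst. rewrite Rabs_R0 in Hx. lra. } lra.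
      rewrite n2. assert (0 <= r^2) by apply pow2_ge_0. lra. }
  apply (le_inv_s _ (K * PI / (Rabs k ^ 3 * r ^ 3)) (2 * K * (a + a * a + a * a * a) + 6 * K * a)).
  { assert (0 < a + a * a + a * a * a) by (assert (0 < a*a) by nra; assert (0 < a*a*a) by nra; lra). nra. }
  intros s Hs.
  assert (Hbs : forall p j, (forall x, Rabs (p x) <= K / nn x r ^ (S j)) -> Rabs (p s) <= K / s /\ Rabs (p (-s)) <= K / s).
  { intros p j Hp. destruct (nn_facts s r Hr) as [_ [_ [ns _]]]. destruct (nn_facts (-s) r Hr) as [_ [_ [ns' _]]].
    rewrite Rabs_right in ns by lra. rewrite Rabs_left in ns' by lra.
    split; (eapply Rle_trans; [apply Hp|]); apply div_pow_le; auto; lra. }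
  destruct (Hbs p0 0%nat) as [b0s b0m]. { intro x. simpl. rewrite Rmult_1_r. apply Hb. }
  destruct (Hbs p1 1%nat) as [b1s b1m]. { intro x. apply Hb. }
  destruct (Hbs p2 2%nat) as [b2s b2m]. { intro x. apply Hb. }
  assert (HR3 : Cmod (@RInt CV (FE p3 k) (- s) s) <= K / r ^ 2 * PI / r).
  { apply (norm_RInt_atan (FE p3 k) (-s) s r (K / r ^ 2)); auto. lra.
    apply Rdiv_le_0_compat; auto. apply pow_lt; auto.
    apply (@RInt_correct CV). apply ex_RInt_FE; auto.
    intros x _. rewrite Cmod_FE. destruct (nn_facts x r Hr) as [n0 [n2 _]].
    destruct (Hb x) as [_ [_ [_ b3]]]. eapply Rle_trans; [exact b3|].
    replace (nn x r ^ 4) with ((x^2 + r^2) * (x^2 + r^2)) by (rewrite <- n2; ring).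
    unfold Rdiv. rewrite Rmult_assoc. apply Rmult_le_compat_l; auto.
    assert (0 < x^2 + r^2) by (apply pos_sq2; auto). assert (0 < r^2) by (apply pow_lt; auto).
    rewrite <- Rinv_mult. apply Rinv_le_contravar. nra. assert (0 <= x^2) by apply pow2_ge_0. nra. }
  assert (HI : Isym p0 k s = Cmult (ck k) (Cminus (Cminus (FE p0 k s) (FE p0 k (-s)))
       (Cmult (ck k) (Cminus (Cminus (FE p1 k s) (FE p1 k (-s)))
       (Cmult (ck k) (Cminus (Cminus (FE p2 k s) (FE p2 k (-s))) (@RInt CV (FE p3 k) (-s) s))))))).
  { unfold Isym. rewrite (RInt_IBP p0 p1), (RInt_IBP p1 p2), (RInt_IBP p2 p3); auto. }
  assert (HIb : Cmod (Isym p0 k s) <= a * (2 * (K / s) + a * (2 * (K / s) + a * (2 * (K / s) + K / r ^ 2 * PI / r)))).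
  { rewrite HI. rewrite Cmod_mult, Cmod_ck by auto. fold a. apply Rmult_le_compat_l; [lra|].
    eapply Rle_trans; [apply Cmod_minus_le|]. apply Rplus_le_compat. apply bdry_bound; auto.
    rewrite Cmod_mult, Cmod_ck by auto. fold a. apply Rmult_le_compat_l; [lra|].
    eapply Rle_trans; [apply Cmod_minus_le|]. apply Rplus_le_compat. apply bdry_bound; auto.
    rewrite Cmod_mult, Cmod_ck by auto. fold a. apply Rmult_le_compat_l; [lra|].
    eapply Rle_trans; [apply Cmod_minus_le|]. apply Rplus_le_compat. apply bdry_bound; auto. auto. }
  pose proof (sym_lim_tail p0 p1 1 K k l HT Hk Hl s Hs) as Htail.
  replace l with (Cplus (Isym p0 k s) (Cminus l (Isym p0 k s))) by ring.
  eapply Rle_trans. apply Cmod_triangle.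
  eapply Rle_trans. apply Rplus_le_compat; [exact HIb | exact Htail].
  right. unfold a. field. repeat split; try lra. 
Qed.


Definition IHyp (h : R -> C) (R0 M : R) : Prop :=
  0 < R0 /\ 0 <= M /\ (forall a b, @ex_RInt CV h a b) /\
  (forall y, R0 <= Rabs y -> Cmod (h y) <= M / y ^ 2).

Lemma RInt_swap_C (h : R -> C) a b : @ex_RInt CV h a b -> Cmod (@RInt CV h b a) = Cmod (@RInt CV h a b).
Proof.
  intro H. rewrite <- (@opp_RInt_swap CV h a b H). rewrite opp_CV. apply Cmod_opp.
Qed.

Lemma seg_bound_I (h : R -> C) R0 M N u v : IHyp h R0 M -> R0 <= N ->
  ((N <= u /\ N <= v) \/ (u <= - N /\ v <= - N)) -> Cmod (@RInt CV h u v) <= M / N.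
Proof.
  intros [HR0 [HM [Hex Hb]]] HN Huv.
  assert (Hw : forall u v, u <= v -> ((N <= u /\ N <= v) \/ (u <= - N /\ v <= - N)) -> Cmod (@RInt CV h u v) <= M / N).
  { clear u v Huv. intros u v Huv Huv'.
    apply (norm_RInt_invsq h u v N M); auto. lra. lra.
    apply (@RInt_correct CV); auto.
    intros x Hx. apply Hb. unfold Rabs; destruct (Rcase_abs x); lra. }
  destruct (Rle_or_lt u v). apply Hw; auto.
  rewrite <- RInt_swap_C by auto. apply Hw. lra. tauto.
Qed.

Lemma improper_exists (h : R -> C) R0 M : IHyp h R0 M ->
  exists l, sym_lim h l /\ improper_int h l.
Proof.
  intros HI. destruct HI as [HR0 [HM [Hex Hb]]] eqn:EHI.
  set (If := fun ab : R * R => @RInt CV h (fst ab) (snd ab)).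
  assert (Hc : exists l, filterlim If (filter_prod (Rbar_locally m_infty) (Rbar_locally p_infty)) (@locally CV l)).
  { apply (@filterlim_locally_cauchy (R*R) CV (filter_prod (Rbar_locally m_infty) (Rbar_locally p_infty)) _).
    intro eps. set (N := R0 + 2 * M / eps + 1).
    assert (HN : R0 < N). { unfold N. assert (0 <= 2 * M / eps). apply Rdiv_le_0_compat; try lra. apply cond_pos. lra. }
    exists (fun ab : R * R => fst ab < - N /\ N < snd ab). split.
    - apply (Filter_prod _ _ _ (fun a => a < - N) (fun b => N < b)).
      exists (- N); auto. exists N; auto. simpl; auto.
    - intros [a b] [a' b'] [Ha Hb'] [Ha' Hb'']. simpl in *.
      apply (@norm_compat1 R_AbsRing CV). rewrite norm_CV, minus_CV. unfold If; simpl.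
      rewrite <- (RInt_Chasles_C h a' a b') by auto.
      rewrite <- (RInt_Chasles_C h a b b') by auto.
      replace (Cminus (Cplus (@RInt CV h a' a) (Cplus (@RInt CV h a b) (@RInt CV h b b'))) (@RInt CV h a b))
        with (Cplus (@RInt CV h a' a) (@RInt CV h b b')) by ring.
      eapply Rle_lt_trans. apply Cmod_triangle.
      eapply Rle_lt_trans. apply Rplus_le_compat; apply (seg_bound_I h R0 M N); auto; lra.
      assert (He : 0 < eps) by apply cond_pos.
      apply (Rmult_lt_reg_r N). lra.
      replace ((M / N + M / N) * N) with (2 * M) by (field; lra).
      unfold N. assert (0 <= 2 * M / eps) by (apply Rdiv_le_0_compat; lra).
      replace (eps * (R0 + 2 * M / eps + 1)) with (eps * R0 + 2 * M + eps) by (field; lra).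
      assert (0 < eps * R0) by (apply Rmult_lt_0_compat; lra). lra. }
  destruct Hc as [l Hl]. exists l. split.
  - unfold sym_lim.
    apply (filterlim_comp _ _ _ (fun r => (- r, r)) If _ (filter_prod (Rbar_locally m_infty) (Rbar_locally p_infty))); auto.
    apply filterlim_pair. apply (filterlim_Rbar_opp p_infty). apply filterlim_id.
  - unfold improper_int, is_RInt_gen, filterlimi, filtermapi. intros P HP.
    specialize (Hl P HP). unfold filtermap in Hl.
    eapply filter_imp; [|exact Hl]. intros [a b] H. exists (If (a, b)). split; auto.
    apply (@RInt_correct CV); auto.
Qed.


Lemma ball_R (x y eps : R) : ball x eps y <-> Rabs (y - x) < eps.
Proof. unfold ball; simpl; unfold AbsRing_ball, abs, minus, plus, opp; simpl. tauto. Qed.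

Lemma cont_R_of (f : R -> R) x : (forall eps : posreal, exists d : posreal, forall y, Rabs (y - x) < d -> Rabs (f y - f x) < eps) -> continuous f x.
Proof.
  intro H. apply filterlim_locally. intro eps. destruct (H eps) as [d Hd].
  exists d. intros y Hy. apply ball_R. apply Hd. apply ball_R in Hy. auto.
Qed.

Lemma c2d_x (h : R -> R -> R) x y : continuity_2d_pt h x y -> continuous (fun t => h t y) x.
Proof.
  intro H. apply cont_R_of. intro eps. destruct (H eps) as [d Hd]. exists d.
  intros u Hu. apply Hd; auto. rewrite Rminus_diag, Rabs_R0. apply cond_pos.
Qed.

Lemma c2d_y (h : R -> R -> R) x y : continuity_2d_pt h x y -> continuous (fun t => h x t) y.
Proof.
  intro H. apply cont_R_of. intro eps. destruct (H eps) as [d Hd]. exists d.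
  intros u Hu. apply Hd; auto. rewrite Rminus_diag, Rabs_R0. apply cond_pos.
Qed.

Lemma c2d_swap (h : R -> R -> R) x y : continuity_2d_pt h x y -> continuity_2d_pt (fun u v => h v u) y x.
Proof.
  intros H eps. destruct (H eps) as [d Hd]. exists d. intros u v Hu Hv. apply Hd; auto.
Qed.

Lemma param_cont (h : R -> R -> R) (a b : R) : (forall x y, continuity_2d_pt h x y) ->
  forall y0, continuous (fun y => RInt (fun x => h x y) a b) y0.
Proof.
  intros Hc y0. apply cont_R_of. intro eps.
  set (e' := eps / (Rabs (b - a) + 1)).
  assert (He' : 0 < e'). { unfold e'. apply Rdiv_lt_0_compat. apply cond_pos. pose proof (Rabs_pos (b - a)); lra. }
  destruct (uniform_continuity_2d h (Rmin a b) (Rmax a b) (y0 - 1) (y0 + 1)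
      (fun x y _ _ => Hc x y) (mkposreal _ He')) as [d Hd].
  assert (Hd1 : 0 < Rmin d 1) by (apply Rmin_pos; [apply cond_pos|lra]).
  exists (mkposreal _ Hd1). simpl. intros y Hy.
  assert (Hy1 : Rabs (y - y0) < d) by (eapply Rlt_le_trans; [exact Hy|apply Rmin_l]).
  assert (Hy2 : Rabs (y - y0) < 1) by (eapply Rlt_le_trans; [exact Hy|apply Rmin_r]).
  assert (Hex : forall y, ex_RInt (fun x => h x y) a b).
  { intro y'. apply (@ex_RInt_continuous R_CompleteNormedModule). intros; apply c2d_x; auto. }
  assert (Heq : RInt (fun x => h x y) a b - RInt (fun x => h x y0) a b = RInt (fun x => h x y - h x y0) a b).
  { rewrite (RInt_minus (fun x => h x y) (fun x => h x y0)); auto. }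
  rewrite Heq.
  apply Rle_lt_trans with (Rabs (b - a) * e').
  - apply (@norm_RInt_le_const_abs R_NormedModule (fun x => h x y - h x y0) a b). 
    + intros x Hx. left. change (norm (h x y - h x y0)) with (Rabs (h x y - h x y0)).
      apply (Hd x y0 x y); auto; try lra.
      apply Rabs_def2 in Hy2. lra.
      rewrite Rminus_diag, Rabs_R0; apply cond_pos.
    + apply (@RInt_correct R_CompleteNormedModule). apply (@ex_RInt_minus R_NormedModule (fun x => h x y) (fun x => h x y0)); auto.
  - unfold e'. pose proof (Rabs_pos (b - a)). pose proof (cond_pos eps).
    apply (Rmult_lt_reg_r (Rabs (b - a) + 1)). lra.
    unfold Rdiv. rewrite Rmult_assoc. rewrite (Rmult_assoc eps). rewrite Rinv_l by lra. nra.
Qed.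

Lemma ex_RInt_param (h : R -> R -> R) (a b c d : R) : (forall x y, continuity_2d_pt h x y) ->
  ex_RInt (fun y => RInt (fun x => h x y) a b) c d.
Proof. intro Hc. apply (@ex_RInt_continuous R_CompleteNormedModule). intros; apply param_cont; auto. Qed.

Lemma fubini_R (h : R -> R -> R) : (forall x y, continuity_2d_pt h x y) ->
  forall a b c d, RInt (fun y => RInt (fun x => h x y) a b) c d = RInt (fun x => RInt (fun y => h x y) c d) a b.
Proof.
  intros Hc a b c d.
  assert (Hcs : forall x y, continuity_2d_pt (fun u v => h v u) x y) by (intros; apply c2d_swap; auto).
  assert (Hexx : forall y u v, ex_RInt (fun x => h x y) u v).
  { intros. apply (@ex_RInt_continuous R_CompleteNormedModule). intros; apply c2d_x; auto. }
  assert (Hexy : forall x u v, ex_RInt (fun y => h x y) u v).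
  { intros. apply (@ex_RInt_continuous R_CompleteNormedModule). intros; apply c2d_y; auto. }
  set (Phi := fun t => RInt (fun y => RInt (fun x => h x y) a t) c d).
  set (W := fun x => RInt (fun y => h x y) c d).
  set (Psi := fun t => RInt W a t).
  assert (HW : forall x, continuous W x).
  { intro x. unfold W. apply (param_cont (fun u v => h v u) c d Hcs). }
  assert (DU : forall y t, is_derive (fun u => RInt (fun x => h x y) a u) t (h t y)).
  { intros y t. apply (is_derive_RInt (fun x => h x y) (fun u => RInt (fun x => h x y) a u) a t).
    apply filter_forall. intros; apply (@RInt_correct R_CompleteNormedModule); auto.
    apply c2d_x; auto. }
  assert (DPhi : forall t, is_derive Phi t (W t)).
  { intro t. unfold Phi, W.
    assert (E1 : RInt (fun y => h t y) c d = RInt (fun y => Derive (fun u => RInt (fun x => h x y) a u) t) c d).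
    { apply RInt_ext. intros y _. symmetry. apply is_derive_unique. apply DU. }
    rewrite E1.
    apply (is_derive_RInt_param (fun u y => RInt (fun x => h x y) a u) c d t).
    - apply filter_forall. intros t' y _. eexists; apply DU.
    - intros y _. apply (continuity_2d_pt_ext h). intros u v. symmetry. apply is_derive_unique. apply DU.
      apply Hc.
    - apply filter_forall. intro t'. apply (ex_RInt_param h); auto. }
  assert (DPsi : forall t, is_derive Psi t (W t)).
  { intro t. unfold Psi. apply (is_derive_RInt W (fun u => RInt W a u) a t).
    apply filter_forall. intros; apply (@RInt_correct R_CompleteNormedModule).
    apply (@ex_RInt_continuous R_CompleteNormedModule). intros; apply HW. apply HW. }
  assert (D0 : forall t, is_derive (fun t => Phi t - Psi t) t 0).
  { intro t. replace 0 with (W t - W t) by ring. apply (is_derive_minus Phi Psi); auto. }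
  assert (Ha : Phi a - Psi a = 0).
  { unfold Phi, Psi. rewrite (@RInt_point R_CompleteNormedModule). 
    rewrite (RInt_ext _ (fun _ => 0)). rewrite RInt_const. cnorm. ring.
    intros y _. apply (@RInt_point R_CompleteNormedModule). }
  assert (Hb : Phi b - Psi b = Phi a - Psi a).
  { destruct (Rtotal_order a b) as [H|[H|H]].
    - symmetry. apply (eq_is_derive (fun t => Phi t - Psi t) a b); auto.
    - subst; auto.
    - apply (eq_is_derive (fun t => Phi t - Psi t) b a); auto. }
  fold (Phi b). fold (W). fold (Psi b). lra.
Qed.


Definition C2 (H : R -> R -> C) : Prop :=
  forall x y, continuity_2d_pt (fun u v => fst (H u v)) x y /\ continuity_2d_pt (fun u v => snd (H u v)) x y.

Lemma cont_C_pair (g : R -> C) y0 : continuous (fun y => fst (g y)) y0 -> continuous (fun y => snd (g y)) y0 ->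
  @continuous R_UniformSpace CV g y0.
Proof.
  intros H1 H2. apply filterlim_locally. intro eps.
  apply filterlim_locally with (eps := eps) in H1. apply filterlim_locally with (eps := eps) in H2.
  eapply filter_imp; [|exact (filter_and _ _ H1 H2)]. intros y [h1 h2]. split; auto.
Qed.

Lemma ex_RInt_C_pair (g : R -> C) a b : ex_RInt (fun y => fst (g y)) a b -> ex_RInt (fun y => snd (g y)) a b ->
  @ex_RInt CV g a b.
Proof. intros H1 H2. exact (@ex_RInt_fct_extend_pair R_NormedModule R_NormedModule g a b H1 H2). Qed.

Lemma RInt_C_comp (g : R -> C) a b : @ex_RInt CV g a b ->
  @RInt CV g a b = (RInt (fun y => fst (g y)) a b, RInt (fun y => snd (g y)) a b).
Proof.
  intro H. pose proof (@RInt_correct CV g a b H) as H'.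
  assert (E1 : RInt (fun y => fst (g y)) a b = fst (@RInt CV g a b)).
  { apply (@is_RInt_unique R_CompleteNormedModule). apply is_RInt_C_fst. auto. }
  assert (E2 : RInt (fun y => snd (g y)) a b = snd (@RInt CV g a b)).
  { apply (@is_RInt_unique R_CompleteNormedModule). apply is_RInt_C_snd. auto. }
  rewrite E1, E2. apply surjective_pairing.
Qed.

Lemma ex_RInt_C2x (H : R -> R -> C) y a b : C2 H -> @ex_RInt CV (fun x => H x y) a b.
Proof.
  intro Hc. apply ex_RInt_C_pair; apply (@ex_RInt_continuous R_CompleteNormedModule); intros;
   apply (c2d_x (fun u v => _ (H u v))); apply Hc.
Qed.

Lemma param_cont_C (H : R -> R -> C) a b : C2 H -> forall y0,
  @continuous R_UniformSpace CV (fun y => @RInt CV (fun x => H x y) a b) y0.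
Proof.
  intros Hc y0.
  apply (continuous_ext (fun y => (RInt (fun x => fst (H x y)) a b, RInt (fun x => snd (H x y)) a b))).
  { intro y. symmetry. apply RInt_C_comp. apply ex_RInt_C2x; auto. }
  apply cont_C_pair; simpl.
  - apply (param_cont (fun u v => fst (H u v))). intros; apply Hc.
  - apply (param_cont (fun u v => snd (H u v))). intros; apply Hc.
Qed.

Lemma ex_RInt_param_C (H : R -> R -> C) a b c d : C2 H ->
  @ex_RInt CV (fun y => @RInt CV (fun x => H x y) a b) c d.
Proof. intro Hc. apply ex_RInt_continuous. intros; apply param_cont_C; auto. Qed.

Lemma C2_swap (H : R -> R -> C) : C2 H -> C2 (fun u v => H v u).
Proof. intros Hc x y. split; apply (c2d_swap (fun u v => _ (H u v))); apply Hc. Qed.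

Lemma fubini_C (H : R -> R -> C) : C2 H -> forall a b c d,
  @RInt CV (fun y => @RInt CV (fun x => H x y) a b) c d = @RInt CV (fun x => @RInt CV (fun y => H x y) c d) a b.
Proof.
  intros Hc a b c d.
  pose proof (C2_swap H Hc) as Hs.
  rewrite (RInt_C_comp _ c d) by (apply ex_RInt_param_C; auto).
  rewrite (RInt_C_comp _ a b) by (apply (ex_RInt_param_C (fun u v => H v u)); auto).
  rewrite (RInt_ext (fun y => fst (@RInt CV (fun x => H x y) a b)) (fun y => RInt (fun x => fst (H x y)) a b)).
  2:{ intros y _. rewrite RInt_C_comp by (apply ex_RInt_C2x; auto). reflexivity. }
  rewrite (RInt_ext (fun y => snd (@RInt CV (fun x => H x y) a b)) (fun y => RInt (fun x => snd (H x y)) a b)).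
  2:{ intros y _. rewrite RInt_C_comp by (apply ex_RInt_C2x; auto). reflexivity. }
  rewrite (RInt_ext (fun x => fst (@RInt CV (fun y => H x y) c d)) (fun x => RInt (fun y => fst (H x y)) c d)).
  2:{ intros x _. rewrite RInt_C_comp by (apply (ex_RInt_C2x (fun u v => H v u)); auto). reflexivity. }
  rewrite (RInt_ext (fun x => snd (@RInt CV (fun y => H x y) c d)) (fun x => RInt (fun y => snd (H x y)) c d)).
  2:{ intros x _. rewrite RInt_C_comp by (apply (ex_RInt_C2x (fun u v => H v u)); auto). reflexivity. }
  rewrite (fubini_R (fun u v => fst (H u v))), (fubini_R (fun u v => snd (H u v))); auto;
   intros; apply Hc.
Qed.


Lemma C2_RtoC (g : R -> R -> R) : (forall x y, continuity_2d_pt g x y) -> C2 (fun u v => RtoC (g u v)).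
Proof.
  intros Hg x y. split; simpl. apply Hg. apply continuity_2d_pt_const.
Qed.

Lemma c2d_of_1 (p : R -> R) x y : continuous p x -> continuity_2d_pt (fun u v => p u) x y.
Proof.
  intro H. apply (continuity_1d_2d_pt_comp p (fun u v => u)). apply continuity_pt_filterlim; auto.
  apply continuity_2d_pt_id1.
Qed.

Lemma c2d_of_2 (p : R -> R) x y : continuous p y -> continuity_2d_pt (fun u v => p v) x y.
Proof.
  intro H. apply (continuity_1d_2d_pt_comp p (fun u v => v)). apply continuity_pt_filterlim; auto.
  apply continuity_2d_pt_id2.
Qed.

Lemma C2_x (P : R -> C) : (forall x, continuous (fun t => fst (P t)) x /\ continuous (fun t => snd (P t)) x) ->
  C2 (fun u v => P u).
Proof. intros H x y. split; apply (c2d_of_1 (fun t => _ (P t))); apply H. Qed.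

Lemma C2_y (P : R -> C) : (forall x, continuous (fun t => fst (P t)) x /\ continuous (fun t => snd (P t)) x) ->
  C2 (fun u v => P v).
Proof. intros H x y. split; apply (c2d_of_2 (fun t => _ (P t))); apply H. Qed.

Lemma C2_mult (H1 H2 : R -> R -> C) : C2 H1 -> C2 H2 -> C2 (fun u v => Cmult (H1 u v) (H2 u v)).
Proof.
  intros A B x y. destruct (A x y) as [a1 a2]. destruct (B x y) as [b1 b2]. split; simpl.
  - apply continuity_2d_pt_minus; apply continuity_2d_pt_mult; auto.
  - apply continuity_2d_pt_plus; apply continuity_2d_pt_mult; auto.
Qed.

Lemma E_comp_cont k x : continuous (fun t => fst (E k t)) x /\ continuous (fun t => snd (E k t)) x.
Proof.
  unfold E, cexpi; simpl. split; apply (@ex_derive_continuous R_AbsRing R_NormedModule); auto_derive; auto.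
Qed.

Lemma C2_FE (g : R -> R -> R) k : (forall x y, continuity_2d_pt g x y) ->
  C2 (fun u v => Cmult (RtoC (g u v)) (E k u)).
Proof. intro Hg. apply C2_mult. apply C2_RtoC; auto. apply (C2_x (E k)). apply E_comp_cont. Qed.

Lemma C2_FE2 (g : R -> R -> R) k1 k2 : (forall x y, continuity_2d_pt g x y) ->
  C2 (fun u v => Cmult (Cmult (RtoC (g u v)) (E k1 u)) (E k2 v)).
Proof. intro Hg. apply C2_mult. apply C2_FE; auto. apply (C2_y (E k2)). apply E_comp_cont. Qed.


Definition GH (g gx gxx gxxx gy : R -> R -> R -> R) (K : R) : Prop :=
  0 <= K /\
  (forall a b c, is_derive (fun t => g t b c) a (gx a b c)) /\
  (forall a b c, is_derive (fun t => gx t b c) a (gxx a b c)) /\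
  (forall a b c, is_derive (fun t => gxx t b c) a (gxxx a b c)) /\
  (forall a b c, is_derive (fun t => g a t c) b (gy a b c)) /\
  (forall c a b, continuity_2d_pt (fun u v => g u v c) a b /\
     continuity_2d_pt (fun u v => gx u v c) a b /\
     continuity_2d_pt (fun u v => gxx u v c) a b /\
     continuity_2d_pt (fun u v => gxxx u v c) a b /\
     continuity_2d_pt (fun u v => gy u v c) a b) /\
  (forall a b c, 1 < norm3 a b c ->
     Rabs (g a b c) <= K / norm3 a b c /\ Rabs (gx a b c) <= K / norm3 a b c ^ 2 /\
     Rabs (gxx a b c) <= K / norm3 a b c ^ 3 /\ Rabs (gxxx a b c) <= K / norm3 a b c ^ 4 /\
     Rabs (gy a b c) <= K / norm3 a b c ^ 2).

Lemma norm3_facts a b c : 0 <= norm3 a b c /\ norm3 a b c ^ 2 = a ^ 2 + b ^ 2 + c ^ 2 /\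
  Rabs a <= norm3 a b c /\ Rabs b <= norm3 a b c /\ Rabs c <= norm3 a b c.
Proof.
  unfold norm3.
  assert (Ha := pow2_ge_0 a). assert (Hb := pow2_ge_0 b). assert (Hc := pow2_ge_0 c).
  split; [apply sqrt_pos|]. split; [rewrite <- Rsqr_pow2; apply Rsqr_sqrt; lra|].
  repeat split; rewrite <- sqrt_Rsqr_abs; apply sqrt_le_1_alt; rewrite Rsqr_pow2; lra.
Qed.

Lemma norm2_facts a b : 0 <= norm2 a b /\ norm2 a b ^ 2 = a ^ 2 + b ^ 2 /\
  Rabs a <= norm2 a b /\ Rabs b <= norm2 a b.
Proof.
  unfold norm2.
  assert (Ha := pow2_ge_0 a). assert (Hb := pow2_ge_0 b).
  split; [apply sqrt_pos|]. split; [rewrite <- Rsqr_pow2; apply Rsqr_sqrt; lra|].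
  repeat split; rewrite <- sqrt_Rsqr_abs; apply sqrt_le_1_alt; rewrite Rsqr_pow2; lra.
Qed.

Lemma nn_norm3 x b c : nn x (norm2 b c) = norm3 x b c.
Proof.
  unfold nn, norm3. f_equal. destruct (norm2_facts b c) as [_ [H _]]. rewrite H. ring.
Qed.

Lemma div_mono (K u v : R) : 0 <= K -> 0 < u -> u <= v -> K / v <= K / u.
Proof. intros. unfold Rdiv. apply Rmult_le_compat_l; auto. apply Rinv_le_contravar; auto. Qed.

Section GHs.
Variables (g gx gxx gxxx gy : R -> R -> R -> R) (K : R).
Hypothesis HG : GH g gx gxx gxxx gy K.

Lemma GH_K : 0 <= K. Proof. apply HG. Qed.
Lemma GH_d0 a b c : is_derive (fun t => g t b c) a (gx a b c). Proof. apply HG. Qed.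
Lemma GH_d1 a b c : is_derive (fun t => gx t b c) a (gxx a b c). Proof. apply HG. Qed.
Lemma GH_d2 a b c : is_derive (fun t => gxx t b c) a (gxxx a b c). Proof. apply HG. Qed.
Lemma GH_dy a b c : is_derive (fun t => g a t c) b (gy a b c). Proof. apply HG. Qed.
Lemma GH_c c a b : continuity_2d_pt (fun u v => g u v c) a b /\
     continuity_2d_pt (fun u v => gx u v c) a b /\
     continuity_2d_pt (fun u v => gxx u v c) a b /\
     continuity_2d_pt (fun u v => gxxx u v c) a b /\
     continuity_2d_pt (fun u v => gy u v c) a b. Proof. apply HG. Qed.
Lemma GH_b a b c : 1 < norm3 a b c ->
     Rabs (g a b c) <= K / norm3 a b c /\ Rabs (gx a b c) <= K / norm3 a b c ^ 2 /\
     Rabs (gxx a b c) <= K / norm3 a b c ^ 3 /\ Rabs (gxxx a b c) <= K / norm3 a b c ^ 4 /\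
     Rabs (gy a b c) <= K / norm3 a b c ^ 2. Proof. apply HG. Qed.

Lemma GH_tail b c : TailHyp (fun t => g t b c) (fun t => gx t b c) 2 K.
Proof.
  split; [lra|]. split; [apply GH_K|]. split; [intro; apply GH_d0|].
  split. { intro x. apply (c2d_x (fun u v => gx u v c)). apply GH_c. }
  intros x Hx. destruct (norm3_facts x b c) as [n0 [n2 [nx _]]].
  destruct (GH_b x b c ltac:(lra)) as [b0 [b1 _]]. split.
  - eapply Rle_trans; [exact b0|]. apply div_mono; auto. apply GH_K. lra.
  - eapply Rle_trans; [exact b1|]. apply div_mono; auto. apply GH_K.
    rewrite <- (pow2_abs x). apply pow_lt. lra.
    rewrite <- (pow2_abs x). apply pow_incr. split; auto. apply Rabs_pos.
Qed.

Lemma GH_A_exists k b c : k <> 0 -> exists l, sym_lim (FE (fun t => g t b c) k) l.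
Proof. intro Hk. apply (sym_lim_exists _ _ 2 K k (GH_tail b c) Hk). Qed.

Lemma GH_A_bound k b c l : k <> 0 -> sym_lim (FE (fun t => g t b c) k) l -> 1 < norm2 b c ->
  Cmod l <= K * PI / (Rabs k ^ 3 * norm2 b c ^ 3).
Proof.
  intros Hk Hl Hn.
  apply (Bnd3 (fun t => g t b c) (fun t => gx t b c) (fun t => gxx t b c) (fun t => gxxx t b c) (norm2 b c) K k l); auto.
  split; [lra|]. split; [apply GH_K|]. split; [intro; apply GH_d0|]. split; [intro; apply GH_d1|].
  split; [intro; apply GH_d2|]. split. { intro x. apply (c2d_x (fun u v => gxxx u v c)). apply GH_c. }
  intro x. rewrite nn_norm3. 
  assert (HH : 1 < norm3 x b c).
  2: { destruct (GH_b x b c HH) as [h0 [h1 [h2 [h3 _]]]]. repeat split; auto. }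
  destruct (norm3_facts x b c) as [_ [n2 _]]. destruct (norm2_facts b c) as [m0 [m2 _]].
  assert (norm2 b c ^ 2 <= norm3 x b c ^ 2) by (rewrite n2, m2; assert (0 <= x^2) by apply pow2_ge_0; lra).
  destruct (Rle_or_lt (norm3 x b c) 1); auto.
  assert (norm3 x b c ^ 2 <= 1). { destruct (norm3_facts x b c) as [h0 _]. simpl. nra. }
  assert (1 < norm2 b c ^ 2) by (simpl; nra). lra.
Qed.

End GHs.


Lemma cont_C_fst (P : R -> C) y : @continuous R_UniformSpace CV P y -> continuous (fun t => fst (P t)) y.
Proof.
  intro H. apply filterlim_locally. intro eps. apply filterlim_locally with (eps := eps) in H.
  eapply filter_imp; [|exact H]. intros t [h1 h2]. exact h1.
Qed.
Lemma cont_C_snd (P : R -> C) y : @continuous R_UniformSpace CV P y -> continuous (fun t => snd (P t)) y.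
Proof.
  intro H. apply filterlim_locally. intro eps. apply filterlim_locally with (eps := eps) in H.
  eapply filter_imp; [|exact H]. intros t [h1 h2]. exact h2.
Qed.

Lemma cRmult (f h : R -> R) y : continuous f y -> continuous h y -> continuous (fun t => f t * h t) y.
Proof. intros. apply (@continuous_mult R_UniformSpace R_AbsRing f h y); auto. Qed.
Lemma cRminus (f h : R -> R) y : continuous f y -> continuous h y -> continuous (fun t => f t - h t) y.
Proof. intros. apply (@continuous_minus R_UniformSpace R_AbsRing R_NormedModule f h y); auto. Qed.
Lemma cRplus (f h : R -> R) y : continuous f y -> continuous h y -> continuous (fun t => f t + h t) y.
Proof. intros. apply (@continuous_plus R_UniformSpace R_AbsRing R_NormedModule f h y); auto. Qed.

Lemma cont_Cmult (P Q : R -> C) y : @continuous R_UniformSpace CV P y -> @continuous R_UniformSpace CV Q y ->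
  @continuous R_UniformSpace CV (fun t => Cmult (P t) (Q t)) y.
Proof.
  intros HP HQ.
  pose proof (cont_C_fst _ _ HP). pose proof (cont_C_snd _ _ HP).
  pose proof (cont_C_fst _ _ HQ). pose proof (cont_C_snd _ _ HQ).
  apply cont_C_pair; simpl.
  - apply (cRminus (fun t => fst (P t) * fst (Q t)) (fun t => snd (P t) * snd (Q t)));
     apply (cRmult (fun t => _ (P t)) (fun t => _ (Q t))); auto.
  - apply (cRplus (fun t => fst (P t) * snd (Q t)) (fun t => snd (P t) * fst (Q t)));
     apply (cRmult (fun t => _ (P t)) (fun t => _ (Q t))); auto.
Qed.

Lemma is_RInt_Cplus (f h : R -> C) a b lf lh : @is_RInt CV f a b lf -> @is_RInt CV h a b lh ->
  @is_RInt CV (fun x => Cplus (f x) (h x)) a b (Cplus lf lh).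
Proof.
  intros H1 H2. pose proof (@is_RInt_plus CV f h a b lf lh H1 H2) as H.
  eapply is_RInt_ext; [|rewrite <- plus_CV; exact H]. intros; apply plus_CV.
Qed.

Lemma is_RInt_Cminus (f h : R -> C) a b lf lh : @is_RInt CV f a b lf -> @is_RInt CV h a b lh ->
  @is_RInt CV (fun x => Cminus (f x) (h x)) a b (Cminus lf lh).
Proof.
  intros H1 H2. pose proof (@is_RInt_minus CV f h a b lf lh H1 H2) as H.
  eapply is_RInt_ext; [|rewrite <- minus_CV; exact H]. intros; apply minus_CV.
Qed.

Lemma Yint1 (psi : R -> R) k2 P M r : (forall y, continuous psi y) -> 0 < P -> 0 <= M -> 0 <= r ->
  (forall y, Rabs (psi y) <= M / (y ^ 2 + P ^ 2)) ->
  Cmod (@RInt CV (FE psi k2) (- r) r) <= M * PI / P.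
Proof.
  intros Hc HP HM Hr Hb.
  apply (norm_RInt_atan (FE psi k2) (-r) r P M); auto. lra.
  apply (@RInt_correct CV). apply ex_RInt_FE; auto.
  intros; rewrite Cmod_FE; auto.
Qed.

Lemma Yint0 (psi0 psi1 : R -> R) k2 P K r : k2 <> 0 -> 0 < P -> 0 <= K -> 0 <= r ->
  (forall y, is_derive psi0 y (psi1 y)) -> (forall y, continuous psi1 y) ->
  (forall y, Rabs (psi0 y) <= K / P) -> (forall y, Rabs (psi1 y) <= K / (y ^ 2 + P ^ 2)) ->
  Cmod (@RInt CV (FE psi0 k2) (- r) r) <= (2 * (K / P) + K * PI / P) / Rabs k2.
Proof.
  intros Hk HP HK Hr Hd Hc B0 B1.
  rewrite (RInt_IBP psi0 psi1); auto.
  rewrite Cmod_mult, Cmod_ck by auto.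
  apply Rle_trans with (/Rabs k2 * (2 * (K/P) + K*PI/P)); [| right; unfold Rdiv; ring].
  apply Rmult_le_compat_l. left; apply Rinv_0_lt_compat, Rabs_pos_lt; auto.
  eapply Rle_trans; [apply Cmod_minus_le|]. apply Rplus_le_compat.
  - eapply Rle_trans; [apply Cmod_minus_le|]. rewrite !Cmod_FE. pose proof (B0 r). pose proof (B0 (-r)). lra.
  - apply Yint1; auto.
Qed.


Section Main2D.
Variables (g gx gxx gxxx gy : R -> R -> R -> R) (K : R).
Hypothesis HG : GH g gx gxx gxxx gy K.
Variables (k1 k2 c : R).
Hypothesis (Hk1 : k1 <> 0) (Hk2 : k2 <> 0).

Let HK := GH_K _ _ _ _ _ _ HG.
Let a1 := / Rabs k1.
Lemma Ha1 : 0 < a1. Proof. unfold a1. apply Rinv_0_lt_compat, Rabs_pos_lt; auto. Qed.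

Lemma pbounds p y : 2 <= Rabs p ->
  Rabs (g p y c) <= K / Rabs p /\ Rabs (gy p y c) <= K / (y ^ 2 + Rabs p ^ 2) /\
  Rabs (gx p y c) <= K / (y ^ 2 + Rabs p ^ 2) /\ Rabs (gxx p y c) <= (K / Rabs p) / (y ^ 2 + Rabs p ^ 2).
Proof.
  intro Hp. destruct (norm3_facts p y c) as [n0 [n2 [np [ny nc]]]].
  assert (H1 : 1 < norm3 p y c) by lra.
  destruct (GH_b _ _ _ _ _ _ HG p y c H1) as [b0 [b1 [b2 [b3 by']]]].
  assert (Hq : y ^ 2 + Rabs p ^ 2 <= norm3 p y c ^ 2).
  { rewrite n2, pow2_abs. assert (0 <= c^2) by apply pow2_ge_0. lra. }
  assert (Hq0 : 0 < y ^ 2 + Rabs p ^ 2).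
  { assert (0 <= y^2) by apply pow2_ge_0. assert (0 < Rabs p ^ 2) by (apply pow_lt; lra). lra. }
  split; [|split; [|split]].
  - eapply Rle_trans; [exact b0|]. apply div_mono; auto; lra.
  - eapply Rle_trans; [exact by'|]. apply div_mono; auto.
  - eapply Rle_trans; [exact b1|]. apply div_mono; auto.
  - eapply Rle_trans; [exact b2|]. unfold Rdiv. rewrite Rmult_assoc, <- Rinv_mult.
    apply Rmult_le_compat_l; auto. apply Rinv_le_contravar. apply Rmult_lt_0_compat; lra.
    replace (norm3 p y c ^ 3) with (norm3 p y c * norm3 p y c ^ 2) by ring.
    apply Rmult_le_compat; try lra. 
Qed.

Lemma xbound x y s : 2 <= s -> s <= Rabs x -> Rabs (gxxx x y c) <= (K / (y ^ 2 + s ^ 2)) / x ^ 2.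
Proof.
  intros Hs Hx. destruct (norm3_facts x y c) as [n0 [n2 [nx _]]].
  assert (H1 : 1 < norm3 x y c) by lra.
  destruct (GH_b _ _ _ _ _ _ HG x y c H1) as [_ [_ [_ [b3 _]]]].
  eapply Rle_trans; [exact b3|].
  assert (Hx2 : s ^ 2 <= x ^ 2) by (rewrite <- (pow2_abs x); apply pow_incr; lra).
  assert (Hy2 : 0 <= y ^ 2) by apply pow2_ge_0. assert (Hc2 : 0 <= c ^ 2) by apply pow2_ge_0.
  assert (Hs2 : 4 <= s ^ 2) by (simpl; nra).
  unfold Rdiv. rewrite Rmult_assoc, <- Rinv_mult.
  apply Rmult_le_compat_l; auto. apply Rinv_le_contravar. apply Rmult_lt_0_compat; lra.
  replace (norm3 x y c ^ 4) with (norm3 x y c ^ 2 * norm3 x y c ^ 2) by ring. rewrite n2.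
  apply Rmult_le_compat; lra.
Qed.

Definition ck3 := Cmult (ck k1) (Cmult (ck k1) (ck k1)).

Definition Qf (p y : R) : C :=
  Cmult (ck k1) (Cminus (FE (fun t => g t y c) k1 p)
    (Cmult (ck k1) (Cminus (FE (fun t => gx t y c) k1 p) (Cmult (ck k1) (FE (fun t => gxx t y c) k1 p))))).

Lemma seg_id u v y : @RInt CV (FE (fun t => g t y c) k1) u v =
  Cminus (Cminus (Qf v y) (Qf u y)) (Cmult ck3 (@RInt CV (FE (fun t => gxxx t y c) k1) u v)).
Proof.
  assert (C1 : forall x, continuous (fun t => gx t y c) x) by (intro; apply (c2d_x (fun u v => gx u v c)); apply (GH_c _ _ _ _ _ _ HG)).
  assert (C2' : forall x, continuous (fun t => gxx t y c) x) by (intro; apply (c2d_x (fun u v => gxx u v c)); apply (GH_c _ _ _ _ _ _ HG)).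
  assert (C3 : forall x, continuous (fun t => gxxx t y c) x) by (intro; apply (c2d_x (fun u v => gxxx u v c)); apply (GH_c _ _ _ _ _ _ HG)).
  rewrite (RInt_IBP (fun t => g t y c) (fun t => gx t y c)); auto; [|intro; apply (GH_d0 _ _ _ _ _ _ HG)].
  rewrite (RInt_IBP (fun t => gx t y c) (fun t => gxx t y c)); auto; [|intro; apply (GH_d1 _ _ _ _ _ _ HG)].
  rewrite (RInt_IBP (fun t => gxx t y c) (fun t => gxxx t y c)); auto; [|intro; apply (GH_d2 _ _ _ _ _ _ HG)].
  unfold Qf, ck3. match goal with |- ?a = ?b => change (@eq C a b) end. ring.
Qed.

Definition beta := a1 * ((2 * K + K * PI) / Rabs k2) + a1 * a1 * (K * PI) + a1 * a1 * a1 * (K * PI).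

Lemma Cmod_ckE p : Cmod (Cmult (ck k1) (E k1 p)) = a1.
Proof. rewrite Cmod_mult, Cmod_ck, Cmod_E by auto. unfold a1. ring. Qed.

Lemma Qint p r : 2 <= Rabs p -> 0 <= r ->
  exists l, @is_RInt CV (fun y => Cmult (Qf p y) (E k2 y)) (- r) r l /\ Cmod l <= beta / Rabs p.
Proof.
  intros Hp Hr.
  assert (HP : 0 < Rabs p) by lra.
  assert (Hcy : forall (h : R -> R -> R -> R), (forall c a b, continuity_2d_pt (fun u v => h u v c) a b) ->
     forall y, continuous (fun t => h p t c) y).
  { intros h Hh y. apply (c2d_y (fun u v => h u v c)). apply Hh. }
  assert (Cg : forall c a b, continuity_2d_pt (fun u v => g u v c) a b) by (intros; apply (GH_c _ _ _ _ _ _ HG)).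
  assert (Cgx : forall c a b, continuity_2d_pt (fun u v => gx u v c) a b) by (intros; apply (GH_c _ _ _ _ _ _ HG)).
  assert (Cgxx : forall c a b, continuity_2d_pt (fun u v => gxx u v c) a b) by (intros; apply (GH_c _ _ _ _ _ _ HG)).
  assert (Cgy : forall c a b, continuity_2d_pt (fun u v => gy u v c) a b) by (intros; apply (GH_c _ _ _ _ _ _ HG)).
  set (l0 := @RInt CV (FE (fun t => g p t c) k2) (- r) r).
  set (l1 := @RInt CV (FE (fun t => gx p t c) k2) (- r) r).
  set (l2 := @RInt CV (FE (fun t => gxx p t c) k2) (- r) r).
  set (w := Cmult (ck k1) (E k1 p)).
  exists (Cminus (Cplus (Cmult w l0) (Cmult (Cmult (ck k1) (Cmult (ck k1) w)) l2)) (Cmult (Cmult (ck k1) w) l1)).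
  split.
  - eapply is_RInt_ext.
    2: { apply is_RInt_Cminus; [apply is_RInt_Cplus|]; apply is_RInt_Cmult_l; apply (@RInt_correct CV);
         apply ex_RInt_FE; apply Hcy; auto. }
    intros y _. unfold Qf, FE, w. match goal with |- ?a = ?b => change (@eq C a b) end. ring.
  - assert (B0 : Cmod l0 <= (2 * (K / Rabs p) + K * PI / Rabs p) / Rabs k2).
    { apply (Yint0 _ (fun t => gy p t c)); auto.
      - intro; apply (GH_dy _ _ _ _ _ _ HG).
      - intro y; apply (pbounds p y); auto.
      - intro y; apply (pbounds p y); auto. }
    assert (B1 : Cmod l1 <= K * PI / Rabs p).
    { apply Yint1; auto. intro y; apply (pbounds p y); auto. }
    assert (B2 : Cmod l2 <= K / Rabs p * PI / Rabs p).
    { apply Yint1; auto. apply Rdiv_le_0_compat; auto. intro y; apply (pbounds p y); auto. }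
    assert (B2' : K / Rabs p * PI / Rabs p <= K * PI / Rabs p).
    { assert (0 <= K * PI / Rabs p) by (apply Rdiv_le_0_compat; auto; pose proof PI_RGT_0; nra).
      replace (K / Rabs p * PI / Rabs p) with ((K * PI / Rabs p) * / Rabs p) by (field; lra).
      assert (/ Rabs p <= 1). { rewrite <- Rinv_1. apply Rinv_le_contravar; lra. } nra. }
    eapply Rle_trans; [apply Cmod_minus_le|]. eapply Rle_trans; [apply Rplus_le_compat_r, Cmod_triangle|].
    rewrite !Cmod_mult. rewrite Cmod_ck by auto. unfold w. rewrite !Cmod_mult, Cmod_ck, Cmod_E by auto.
    fold a1. pose proof Ha1. pose proof (Cmod_ge_0 l0). pose proof (Cmod_ge_0 l1). pose proof (Cmod_ge_0 l2).
    apply Rle_trans with (a1 * ((2 * (K / Rabs p) + K * PI / Rabs p) / Rabs k2) + a1 * (a1 * (a1 * 1)) * (K * PI / Rabs p)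
        + a1 * (a1 * 1) * (K * PI / Rabs p)).
    { assert (a1 * 1 * Cmod l0 <= a1 * ((2 * (K / Rabs p) + K * PI / Rabs p) / Rabs k2)) by (rewrite Rmult_1_r; apply Rmult_le_compat_l; lra).
      assert (a1 * (a1 * (a1 * 1)) * Cmod l2 <= a1 * (a1 * (a1 * 1)) * (K * PI / Rabs p)) by (apply Rmult_le_compat_l; nra).
      assert (a1 * (a1 * 1) * Cmod l1 <= a1 * (a1 * 1) * (K * PI / Rabs p)) by (apply Rmult_le_compat_l; nra).
      lra. }
    unfold beta. right. field. split; [apply Rabs_no_R0; auto | lra].
Qed.

Lemma Cgxxx : forall c a b, continuity_2d_pt (fun u v => gxxx u v c) a b.
Proof. intros; apply (GH_c _ _ _ _ _ _ HG). Qed.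
Lemma Cg0 : forall c a b, continuity_2d_pt (fun u v => g u v c) a b.
Proof. intros; apply (GH_c _ _ _ _ _ _ HG). Qed.

Lemma Tint u v s r : 2 <= s -> u <= v -> (s <= u \/ v <= - s) -> 0 <= r ->
  exists l, @is_RInt CV (fun y => Cmult (@RInt CV (FE (fun t => gxxx t y c) k1) u v) (E k2 y)) (- r) r l /\
    Cmod l <= K / s * PI / s.
Proof.
  intros Hs Huv Hsu Hr.
  set (T := fun y => @RInt CV (FE (fun t => gxxx t y c) k1) u v).
  assert (HT : forall y, Cmod (T y) <= (K / (y ^ 2 + s ^ 2)) / s).
  { intro y. apply (norm_RInt_invsq (FE (fun t => gxxx t y c) k1) u v s); auto; try lra.
    apply Rdiv_le_0_compat; auto. apply pos_sq2; lra.
    apply (@RInt_correct CV). apply ex_RInt_FE. intro; apply (c2d_x (fun u v => gxxx u v c)); apply Cgxxx.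
    intros x Hx. rewrite Cmod_FE. apply xbound; auto. unfold Rabs; destruct (Rcase_abs x); lra. }
  assert (Hex : @ex_RInt CV (fun y => Cmult (T y) (E k2 y)) (- r) r).
  { apply ex_RInt_continuous. intros y _. apply cont_Cmult; [|apply continuous_E].
    unfold T. apply (param_cont_C (fun x y => Cmult (RtoC (gxxx x y c)) (E k1 x))).
    apply C2_FE. apply Cgxxx. }
  exists (@RInt CV (fun y => Cmult (T y) (E k2 y)) (- r) r). split.
  - apply (@RInt_correct CV); auto.
  - apply (norm_RInt_atan (fun y => Cmult (T y) (E k2 y)) (-r) r s (K / s)); auto; try lra.
    apply Rdiv_le_0_compat; lra. apply (@RInt_correct CV); auto.
    intros y _. rewrite Cmod_mult, Cmod_E, Rmult_1_r. eapply Rle_trans; [apply HT|].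
    right. field. split; [lra|]. apply Rgt_not_eq, pos_sq2; lra.
Qed.

Definition H2 (a b : R) : C := Cmult (Cmult (RtoC (g a b c)) (E k1 a)) (E k2 b).
Definition fS (s y : R) : C := @RInt CV (fun a => H2 a y) (- s) s.

Lemma fS_eq s y : fS s y = Cmult (Isym (fun t => g t y c) k1 s) (E k2 y).
Proof.
  unfold fS, Isym. apply (@is_RInt_unique CV). unfold H2.
  apply (is_RInt_Cmult_r (FE (fun t => g t y c) k1)). apply (@RInt_correct CV).
  apply ex_RInt_FE. intro; apply (c2d_x (fun u v => g u v c)); apply Cg0.
Qed.

Lemma fS_ex s a b : @ex_RInt CV (fS s) a b.
Proof. apply (ex_RInt_param_C H2). unfold H2. apply C2_FE2. apply Cg0. Qed.

Definition Cc' := 4 * beta + 2 * (a1 * a1 * a1) * (K * PI).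

Lemma DIFF s s' r : 2 <= s -> s <= s' -> 0 <= r ->
  Cmod (Cminus (@RInt CV (fS s') (- r) r) (@RInt CV (fS s) (- r) r)) <= Cc' / s.
Proof.
  intros Hs Hss Hr.
  assert (Hc0 : forall y x, continuous (fun t => g t y c) x) by (intros; apply (c2d_x (fun u v => g u v c)); apply Cg0).
  destruct (Qint s' r) as [q1 [Hq1 Bq1]]; [rewrite Rabs_right; lra| auto |].
  destruct (Qint s r) as [q2 [Hq2 Bq2]]; [rewrite Rabs_right; lra| auto |].
  destruct (Qint (-s) r) as [q3 [Hq3 Bq3]]; [rewrite Rabs_left; lra| auto |].
  destruct (Qint (-s') r) as [q4 [Hq4 Bq4]]; [rewrite Rabs_left; lra| auto |].
  destruct (Tint (-s') (-s) s r) as [t1 [Ht1 Bt1]]; auto; try lra.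
  destruct (Tint s s' s r) as [t2 [Ht2 Bt2]]; auto; try lra.
  set (V := Cplus (Cminus (Cminus q3 q4) (Cmult ck3 t1)) (Cminus (Cminus q1 q2) (Cmult ck3 t2))).
  assert (HV : @is_RInt CV (fun y => Cminus (fS s' y) (fS s y)) (- r) r V).
  { eapply is_RInt_ext.
    2: { apply is_RInt_Cplus; (apply is_RInt_Cminus; [apply is_RInt_Cminus|apply is_RInt_Cmult_l]); eauto. }
    intros y _. rewrite !fS_eq. unfold Isym.
    rewrite <- (RInt_Chasles_C _ (-s') (-s) s') by (apply ex_RInt_FE; auto).
    rewrite <- (RInt_Chasles_C _ (-s) s s') by (apply ex_RInt_FE; auto).
    rewrite !seg_id. match goal with |- ?a = ?b => change (@eq C a b) end. ring. }
  assert (HV2 : @is_RInt CV (fun y => Cminus (fS s' y) (fS s y)) (- r) r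
      (Cminus (@RInt CV (fS s') (- r) r) (@RInt CV (fS s) (- r) r))).
  { apply is_RInt_Cminus; apply (@RInt_correct CV); apply fS_ex. }
  rewrite <- (@is_RInt_unique CV _ _ _ _ HV2), (@is_RInt_unique CV _ _ _ _ HV).
  unfold V.
  assert (Hb : forall q, Cmod q <= beta / s -> Cmod q <= beta / s) by auto.
  assert (Hbeta : 0 <= beta).
  { unfold beta. pose proof Ha1. pose proof PI_RGT_0. assert (0 < Rabs k2) by (apply Rabs_pos_lt; auto).
    assert (HK' : 0 <= K) by exact HK.
    assert (0 <= K * PI) by (apply Rmult_le_pos; lra).
    assert (0 <= (2 * K + K * PI) / Rabs k2) by (apply Rdiv_le_0_compat; lra). 
    assert (0 <= a1 * a1) by (apply Rmult_le_pos; lra).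
    assert (0 <= a1 * a1 * a1) by (apply Rmult_le_pos; lra).
    assert (0 <= a1 * ((2 * K + K * PI) / Rabs k2)) by (apply Rmult_le_pos; lra).
    assert (0 <= a1 * a1 * (K * PI)) by (apply Rmult_le_pos; lra).
    assert (0 <= a1 * a1 * a1 * (K * PI)) by (apply Rmult_le_pos; lra). lra. }
  assert (Rq : forall p, s <= Rabs p -> beta / Rabs p <= beta / s) by (intros; apply div_mono; auto; lra).
  assert (Bq1' : Cmod q1 <= beta / s) by (eapply Rle_trans; [exact Bq1|apply Rq; rewrite Rabs_right; lra]).
  assert (Bq2' : Cmod q2 <= beta / s) by (eapply Rle_trans; [exact Bq2|apply Rq; rewrite Rabs_right; lra]).
  assert (Bq3' : Cmod q3 <= beta / s) by (eapply Rle_trans; [exact Bq3|apply Rq; rewrite Rabs_left; lra]).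
  assert (Bq4' : Cmod q4 <= beta / s) by (eapply Rle_trans; [exact Bq4|apply Rq; rewrite Rabs_left; lra]).
  assert (Hck3 : Cmod ck3 = a1 * a1 * a1) by (unfold ck3; rewrite !Cmod_mult, Cmod_ck by auto; unfold a1; ring).
  assert (Bt : K / s * PI / s <= K * PI / s).
  { assert (HK' : 0 <= K) by exact HK.
    assert (0 <= K * PI / s) by (apply Rdiv_le_0_compat; [apply Rmult_le_pos; pose proof PI_RGT_0; lra | lra]).
    replace (K / s * PI / s) with ((K * PI / s) * / s) by (field; lra).
    assert (/ s <= 1). { rewrite <- Rinv_1. apply Rinv_le_contravar; lra. } nra. }
  pose proof Ha1.
  assert (B3 : Cmod (Cmult ck3 t1) <= a1 * a1 * a1 * (K * PI / s)) by (rewrite Cmod_mult, Hck3; apply Rmult_le_compat_l; [nra|lra]).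
  assert (B4 : Cmod (Cmult ck3 t2) <= a1 * a1 * a1 * (K * PI / s)) by (rewrite Cmod_mult, Hck3; apply Rmult_le_compat_l; [nra|lra]).
  eapply Rle_trans; [apply Cmod_triangle|].
  assert (E1 := Cmod_minus_le (Cminus q3 q4) (Cmult ck3 t1)).
  assert (E2 := Cmod_minus_le q3 q4).
  assert (E3 := Cmod_minus_le (Cminus q1 q2) (Cmult ck3 t2)).
  assert (E4 := Cmod_minus_le q1 q2).
  apply Rle_trans with (4 * (beta / s) + 2 * (a1 * a1 * a1 * (K * PI / s))); [lra|].
  right. unfold Cc'. field. lra.
Qed.
End Main2D.


Lemma Cminus_0_r' (z : C) : Cminus z (RtoC 0) = z.
Proof. ring. Qed.

Section Main2Db.
Variables (g gx gxx gxxx gy : R -> R -> R -> R) (K : R).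
Hypothesis HG : GH g gx gxx gxxx gy K.
Variables (k1 k2 c : R).
Hypothesis (Hk1 : k1 <> 0) (Hk2 : k2 <> 0).
Variable A : R -> C.
Hypothesis HA : forall y, sym_lim (FE (fun t => g t y c) k1) (A y).

Definition gfun (y : R) : C := Cmult (A y) (E k2 y).

Lemma unif s y : 2 <= s -> Cmod (Cminus (A y) (Isym (fun t => g t y c) k1 s)) <= 6 * K / (Rabs k1 * s).
Proof. intro Hs. apply (sym_lim_tail _ _ 2 K k1 (A y) (GH_tail _ _ _ _ _ _ HG y c) Hk1 (HA y) s Hs). Qed.

Lemma IE a b : exists If, filterlim (fun s => @RInt CV (fS g k1 k2 c s) a b) (Rbar_locally p_infty) (@locally CV If) /\
  @is_RInt CV gfun a b If.
Proof.
  apply (@filterlim_RInt R CV (fS g k1 k2 c) a b (Rbar_locally p_infty) (Rbar_locally_filter _) gfun).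
  - intro s. apply (@RInt_correct CV). apply (fS_ex _ _ _ _ _ _ HG).
  - apply filterlim_locally. intro eps.
    assert (Hks : 0 < Rabs k1) by (apply Rabs_pos_lt; auto).
    assert (HK : 0 <= K) by apply HG.
    exists (2 + 6 * K / (Rabs k1 * eps)). intros s Hs.
    assert (Hq : 0 <= 6 * K / (Rabs k1 * eps)) by (apply Rdiv_le_0_compat; [lra| apply Rmult_lt_0_compat; [lra|apply cond_pos]]).
    intro y. apply (@norm_compat1 R_AbsRing CV). rewrite norm_CV, minus_CV.
    rewrite (fS_eq _ _ _ _ _ _ HG). unfold gfun.
    replace (Cminus (Cmult (Isym (fun t => g t y c) k1 s) (E k2 y)) (Cmult (A y) (E k2 y)))
      with (Cmult (Cminus (Isym (fun t => g t y c) k1 s) (A y)) (E k2 y)) by ring.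
    rewrite Cmod_mult, Cmod_E, Rmult_1_r, Cmod_minus_sym.
    eapply Rle_lt_trans. apply unif; lra.
    apply small_frac; auto; try lra. apply cond_pos.
Qed.

Lemma gfun_ex a b : @ex_RInt CV gfun a b.
Proof. destruct (IE a b) as [If [_ H]]. eexists; eauto. Qed.

Lemma Jlim r : filterlim (fun s => @RInt CV (fS g k1 k2 c s) (- r) r) (Rbar_locally p_infty) (@locally CV (@RInt CV gfun (- r) r)).
Proof.
  destruct (IE (-r) r) as [If [H1 H2]]. rewrite (@is_RInt_unique CV _ _ _ _ H2). auto.
Qed.

Lemma KEY r s : 0 <= r -> 2 <= s ->
  Cmod (Cminus (@RInt CV gfun (- r) r) (@RInt CV (fS g k1 k2 c s) (- r) r)) <= Cc' K k1 k2 / s.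
Proof.
  intros Hr Hs.
  apply (lim_Cmod_le (Rbar_locally p_infty) (fun s' => @RInt CV (fS g k1 k2 c s') (- r) r)).
  apply Jlim. exists s. intros s' Hs'. apply (DIFF _ _ _ _ _ _ HG); auto; lra.
Qed.


Lemma A_bound_y y : 1 < norm2 y c -> Cmod (A y) <= K * PI / (Rabs k1 ^ 3 * norm2 y c ^ 3).
Proof. intro H. apply (GH_A_bound _ _ _ _ _ _ HG k1 y c); auto. Qed.

Lemma gfun_IHyp : IHyp gfun 2 (K * PI / Rabs k1 ^ 3).
Proof.
  assert (HK : 0 <= K) by apply HG. pose proof PI_RGT_0.
  assert (Hk3 : 0 < Rabs k1 ^ 3) by (apply pow_lt, Rabs_pos_lt; auto).
  split; [lra|]. split. { apply Rdiv_le_0_compat; auto. apply Rmult_le_pos; lra. }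
  split. { apply gfun_ex. }
  intros y Hy. unfold gfun. rewrite Cmod_mult, Cmod_E, Rmult_1_r.
  destruct (norm2_facts y c) as [n0 [n2 [ny nc]]].
  eapply Rle_trans. apply A_bound_y. lra.
  assert (Hy2 : 4 <= y ^ 2) by (rewrite <- (pow2_abs y); simpl; nra).
  assert (y ^ 2 <= norm2 y c ^ 3).
  { rewrite <- (pow2_abs y). replace (norm2 y c ^ 3) with (norm2 y c * norm2 y c ^ 2) by ring.
    assert (Rabs y ^ 2 <= norm2 y c ^ 2) by (apply pow_incr; split; [apply Rabs_pos|auto]).
    assert (1 <= norm2 y c) by lra. assert (0 <= Rabs y ^ 2) by apply pow2_ge_0. nra. }
  unfold Rdiv. rewrite Rinv_mult, <- Rmult_assoc. apply Rmult_le_compat_l.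
  apply Rmult_le_pos; [apply Rmult_le_pos; lra| left; apply Rinv_0_lt_compat; auto].
  apply Rinv_le_contravar; lra.
Qed.

Lemma Main2D_final : exists F0,
  sym_lim2 (fun a b => Cmult (Cmult (RtoC (g a b c)) (cexpi (- (k1 * a)))) (cexpi (- (k2 * b)))) F0 /\
  improper_int gfun F0 /\ (1 < Rabs c -> Cmod F0 <= K * PI / (Rabs k1 ^ 3 * Rabs c) * PI / Rabs c).
Proof.
  assert (HK : 0 <= K) by apply HG. pose proof PI_RGT_0.
  destruct (improper_exists gfun _ _ gfun_IHyp) as [F0 [HS HI]].
  exists F0. split; [|split; auto].
  - unfold sym_lim2. apply filterlim_locally. intro eps.
    assert (Hnf : 0 < @norm_factor R_AbsRing CV) by apply norm_factor_gt_0.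
    assert (He : 0 < eps) by apply cond_pos.
    assert (He2 : 0 < eps / 2 / @norm_factor R_AbsRing CV) by (apply Rdiv_lt_0_compat; lra).
    pose proof (HS _ (locally_ball F0 (mkposreal _ He2))) as H1. destruct H1 as [M HM].
    set (CC := Cc' K k1 k2).
    assert (HCC : 0 <= CC).
    { unfold CC, Cc', beta. pose proof (Rabs_pos_lt k1 Hk1). pose proof (Rabs_pos_lt k2 Hk2).
      set (a := / Rabs k1). assert (0 < a) by (apply Rinv_0_lt_compat; auto).
      assert (0 <= K * PI) by (apply Rmult_le_pos; lra).
      assert (0 <= (2 * K + K * PI) / Rabs k2) by (apply Rdiv_le_0_compat; lra).
      assert (0 <= a * a) by (apply Rmult_le_pos; lra).
      assert (0 <= a * a * a) by (apply Rmult_le_pos; lra).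
      assert (0 <= a * ((2 * K + K * PI) / Rabs k2)) by (apply Rmult_le_pos; lra).
      assert (0 <= a * a * (K * PI)) by (apply Rmult_le_pos; lra).
      assert (0 <= a * a * a * (K * PI)) by (apply Rmult_le_pos; lra). lra. }
    apply (Filter_prod _ _ _ (fun r => Rmax M 0 < r) (fun s => 2 + 2 * CC / eps < s)).
    + exists (Rmax M 0). auto.
    + exists (2 + 2 * CC / eps). auto.
    + intros r s Hr Hs. simpl.
      assert (Hr0 : 0 <= r) by (pose proof (Rmax_r M 0); lra).
      assert (HrM : M < r) by (pose proof (Rmax_l M 0); lra).
      assert (Hq : 0 <= 2 * CC / eps) by (apply Rdiv_le_0_compat; lra).
      apply (@norm_compat1 R_AbsRing CV). rewrite norm_CV, minus_CV.
      specialize (HM r HrM). apply (@norm_compat2 R_AbsRing CV) in HM. simpl in HM.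
      rewrite norm_CV, minus_CV in HM.
      replace (norm_factor * (eps / 2 / norm_factor)) with (eps / 2) in HM by (field; lra).
      pose proof (KEY r s Hr0 ltac:(lra)) as HK2. fold CC in HK2.
      apply Rle_lt_trans with (Cmod (Cminus (@RInt CV (fS g k1 k2 c s) (- r) r) F0)); [right; reflexivity|].
      replace (Cminus (@RInt CV (fS g k1 k2 c s) (- r) r) F0) with
        (Cplus (Copp (Cminus (@RInt CV gfun (- r) r) (@RInt CV (fS g k1 k2 c s) (- r) r)))
               (Cminus (@RInt CV gfun (- r) r) F0)) by ring.
      eapply Rle_lt_trans. apply Cmod_triangle. rewrite Cmod_opp.
      assert (CC / s <= eps / 2).
      { apply (Rmult_le_reg_r s). lra. unfold Rdiv. rewrite Rmult_assoc, Rinv_l, Rmult_1_r by lra.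
        assert (2 * CC / eps * eps = 2 * CC) by (field; lra).
        assert (2 * CC / eps * eps <= s * eps) by (apply Rmult_le_compat_r; lra). lra. }
      lra.
  - intro Hc.
    assert (Hc0 : 0 < Rabs c) by lra.
    apply Rle_trans with (Cmod (Cminus F0 (RtoC 0))); [right; f_equal; ring|].
    apply (lim_Cmod_le (Rbar_locally p_infty) (fun r => @RInt CV gfun (- r) r)); auto.
    exists 0. intros r Hr.
    rewrite Cminus_0_r'.
    apply (norm_RInt_atan gfun (-r) r (Rabs c) (K * PI / (Rabs k1 ^ 3 * Rabs c))); auto; try lra.
    apply Rdiv_le_0_compat. apply Rmult_le_pos; lra. apply Rmult_lt_0_compat; auto. apply pow_lt, Rabs_pos_lt; auto.
    apply (@RInt_correct CV). apply gfun_ex.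
    intros y _. unfold gfun. rewrite Cmod_mult, Cmod_E, Rmult_1_r.
    destruct (norm2_facts y c) as [n0 [n2 [ny nc]]].
    eapply Rle_trans. apply A_bound_y. lra.
    assert (Hk3 : 0 < Rabs k1 ^ 3) by (apply pow_lt, Rabs_pos_lt; auto).
    assert (Hq : Rabs c * (y ^ 2 + Rabs c ^ 2) <= norm2 y c ^ 3).
    { replace (norm2 y c ^ 3) with (norm2 y c * norm2 y c ^ 2) by ring. rewrite n2, pow2_abs.
      apply Rmult_le_compat_r; auto. assert (0 <= y^2) by apply pow2_ge_0. assert (0 <= c^2) by apply pow2_ge_0. lra. }
    assert (Hq0 : 0 < y ^ 2 + Rabs c ^ 2) by (apply pos_sq2; auto).
    unfold Rdiv. rewrite !Rinv_mult. 
    replace (K * PI * (/ Rabs k1 ^ 3 * / Rabs c) * / (y ^ 2 + Rabs c ^ 2)) with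
      (K * PI * / Rabs k1 ^ 3 * / (Rabs c * (y ^ 2 + Rabs c ^ 2))).
    2: { assert (0 < Rabs k1) by (apply Rabs_pos_lt; auto). field; repeat split; intro; lra. }
    apply Rle_trans with (K * PI * / Rabs k1 ^ 3 * / (norm2 y c ^ 3)); [right; ring|].
    apply Rmult_le_compat_l. apply Rmult_le_pos; [apply Rmult_le_pos; lra| left; apply Rinv_0_lt_compat; auto].
    apply Rinv_le_contravar; [apply Rmult_lt_0_compat; auto|auto].
Qed.
End Main2Db.


Lemma slice_cont (F : R * R * R -> R) (m : R -> R -> R * R * R) a b :
  continuous F (m a b) ->
  (forall (eps : posreal) u v, Rabs (u - a) < eps -> Rabs (v - b) < eps -> ball (m a b) eps (m u v)) ->
  continuity_2d_pt (fun u v => F (m u v)) a b.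
Proof.
  intros Hc Hm. apply continuity_2d_pt_filterlim.
  apply (filterlim_comp _ _ _ (fun z : R * R => m (fst z) (snd z)) F _ (locally (m a b))); auto.
  apply filterlim_locally. intro eps.
  apply (proj1 (locally_2d_locally (fun u v => ball (m a b) eps (m u v)) a b)). exists eps. intros u v Hu Hv. apply Hm; auto.
Qed.

Ltac ball_tac := intros ?eps ?u ?v ?Hu ?Hv; repeat split; simpl; apply ball_R;
  try (rewrite Rminus_diag, Rabs_R0; apply cond_pos); assumption.

Lemma norm3_perm1 a b c : norm3 b a c = norm3 a b c. Proof. unfold norm3. f_equal. ring. Qed.
Lemma norm3_perm2 a b c : norm3 a c b = norm3 a b c. Proof. unfold norm3. f_equal. ring. Qed.
Lemma norm3_perm3 a b c : norm3 b c a = norm3 a b c. Proof. unfold norm3. f_equal. ring. Qed.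
Lemma norm3_perm4 a b c : norm3 c a b = norm3 a b c. Proof. unfold norm3. f_equal. ring. Qed.
Lemma norm3_perm5 a b c : norm3 c b a = norm3 a b c. Proof. unfold norm3. f_equal. ring. Qed.

Lemma le_Kdiv (K0 Kt n : R) (j : nat) : K0 <= Kt -> 0 < n -> K0 / n ^ j <= Kt / n ^ j.
Proof. intros. unfold Rdiv. apply Rmult_le_compat_r; auto. left; apply Rinv_0_lt_compat, pow_lt; auto. Qed.

Lemma swap_lim2 (H H' : R -> R -> C) (F F' : C) : C2 H -> (forall a b, H' a b = H b a) ->
  sym_lim2 H F -> sym_lim2 H' F' -> F = F'.
Proof.
  intros Hc Heq H1 H2. unfold sym_lim2 in *.
  apply (@filterlim_locally_unique (R * R) R_AbsRing CV (filter_prod (Rbar_locally p_infty) (Rbar_locally p_infty)) _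
     (fun rs => @RInt CV (fun b => @RInt CV (fun a => H' a b) (- snd rs) (snd rs)) (- fst rs) (fst rs))); auto.
  eapply filterlim_ext.
  2: { apply (filterlim_comp _ _ _ (fun rs : R * R => (snd rs, fst rs))
          (fun rs : R * R => @RInt CV (fun b => @RInt CV (fun a => H a b) (- snd rs) (snd rs)) (- fst rs) (fst rs))
          _ (filter_prod (Rbar_locally p_infty) (Rbar_locally p_infty))); [|exact H1].
       apply filterlim_pair. apply filterlim_snd. apply filterlim_fst. }
  intros [r s]. simpl.
  rewrite (fubini_C H Hc (- r) r (- s) s).
  apply (@RInt_ext CV). intros x _. apply (@RInt_ext CV). intros y _. symmetry. apply Heq.
Qed.


Ltac ctac Hs L m a b :=
  refine (continuity_2d_pt_ext _ _ a b _ (slice_cont (fun q => pdl3 L _ (fst (fst q)) (snd (fst q)) (snd q)) m a b (proj2 (Hs L) _) _));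
  [intros; reflexivity | ball_tac].

Lemma GH_P1 (f : R -> R -> R -> R) : normal3 f -> exists K,
  GH (fun a b c => f a b c) (fun a b c => pd3 dX f a b c) (fun a b c => pd3 dX (pd3 dX f) a b c)
     (fun a b c => pd3 dX (pd3 dX (pd3 dX f)) a b c) (fun a b c => pd3 dY f a b c) K.
Proof.
  intros [Hs [_ [_ [_ [[K0 HK0] [Hm _]]]]]].
  destruct (Hm 1%nat 0%nat 0%nat ltac:(lia)) as [K1 HK1].
  destruct (Hm 2%nat 0%nat 0%nat ltac:(lia)) as [K2 HK2].
  destruct (Hm 3%nat 0%nat 0%nat ltac:(lia)) as [K3 HK3].
  destruct (Hm 0%nat 1%nat 0%nat ltac:(lia)) as [K4 HK4].
  set (Kt := Rabs K0 + Rabs K1 + Rabs K2 + Rabs K3 + Rabs K4).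
  assert (A0 := Rabs_pos K0). assert (A1 := Rabs_pos K1). assert (A2 := Rabs_pos K2).
  assert (A3 := Rabs_pos K3). assert (A4 := Rabs_pos K4).
  assert (B0 := Rle_abs K0). assert (B1 := Rle_abs K1). assert (B2 := Rle_abs K2).
  assert (B3 := Rle_abs K3). assert (B4 := Rle_abs K4).
  exists Kt. split; [unfold Kt; lra|].
  split; [intros a b c; apply Derive_correct; exact (proj1 (Hs nil) dX a b c)|].
  split; [intros a b c; apply Derive_correct; exact (proj1 (Hs (dX::nil)) dX a b c)|].
  split; [intros a b c; apply Derive_correct; exact (proj1 (Hs (dX::dX::nil)) dX a b c)|].
  split; [intros a b c; apply Derive_correct; exact (proj1 (Hs nil) dY a b c)|].
  split.
  { intros c a b. split; [|split; [|split; [|split]]].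
    - ctac Hs (@nil dir3) (fun u v : R => ((u,v),c)) a b.
    - ctac Hs (dX::nil) (fun u v : R => ((u,v),c)) a b.
    - ctac Hs (dX::dX::nil) (fun u v : R => ((u,v),c)) a b.
    - ctac Hs (dX::dX::dX::nil) (fun u v : R => ((u,v),c)) a b.
    - ctac Hs (dY::nil) (fun u v : R => ((u,v),c)) a b. }
  intros a b c Hn.
  assert (EN : norm3 a b c = norm3 a b c) by (unfold norm3; f_equal; ring).
  try rewrite <- EN in Hn |- *.
  assert (Hp : 0 < norm3 a b c) by lra.
  split; [|split; [|split; [|split]]].
  - eapply Rle_trans; [apply (HK0 a b c Hn)|]. unfold Rdiv. apply Rmult_le_compat_r.
    left; apply Rinv_0_lt_compat; auto. unfold Kt; lra.
  - eapply Rle_trans; [apply (HK1 a b c Hn)|]. apply le_Kdiv; auto. unfold Kt; lra.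
  - eapply Rle_trans; [apply (HK2 a b c Hn)|]. apply le_Kdiv; auto. unfold Kt; lra.
  - eapply Rle_trans; [apply (HK3 a b c Hn)|]. apply le_Kdiv; auto. unfold Kt; lra.
  - eapply Rle_trans; [apply (HK4 a b c Hn)|]. apply le_Kdiv; auto. unfold Kt; lra.
Qed.

Lemma GH_P2 (f : R -> R -> R -> R) : normal3 f -> exists K,
  GH (fun a b c => f b a c) (fun a b c => pd3 dY f b a c) (fun a b c => pd3 dY (pd3 dY f) b a c)
     (fun a b c => pd3 dY (pd3 dY (pd3 dY f)) b a c) (fun a b c => pd3 dX f b a c) K.
Proof.
  intros [Hs [_ [_ [_ [[K0 HK0] [Hm _]]]]]].
  destruct (Hm 0%nat 1%nat 0%nat ltac:(lia)) as [K1 HK1].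
  destruct (Hm 0%nat 2%nat 0%nat ltac:(lia)) as [K2 HK2].
  destruct (Hm 0%nat 3%nat 0%nat ltac:(lia)) as [K3 HK3].
  destruct (Hm 1%nat 0%nat 0%nat ltac:(lia)) as [K4 HK4].
  set (Kt := Rabs K0 + Rabs K1 + Rabs K2 + Rabs K3 + Rabs K4).
  assert (A0 := Rabs_pos K0). assert (A1 := Rabs_pos K1). assert (A2 := Rabs_pos K2).
  assert (A3 := Rabs_pos K3). assert (A4 := Rabs_pos K4).
  assert (B0 := Rle_abs K0). assert (B1 := Rle_abs K1). assert (B2 := Rle_abs K2).
  assert (B3 := Rle_abs K3). assert (B4 := Rle_abs K4).
  exists Kt. split; [unfold Kt; lra|].
  split; [intros a b c; apply Derive_correct; exact (proj1 (Hs nil) dY b a c)|].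
  split; [intros a b c; apply Derive_correct; exact (proj1 (Hs (dY::nil)) dY b a c)|].
  split; [intros a b c; apply Derive_correct; exact (proj1 (Hs (dY::dY::nil)) dY b a c)|].
  split; [intros a b c; apply Derive_correct; exact (proj1 (Hs nil) dX b a c)|].
  split.
  { intros c a b. split; [|split; [|split; [|split]]].
    - ctac Hs (@nil dir3) (fun u v : R => ((v,u),c)) a b.
    - ctac Hs (dY::nil) (fun u v : R => ((v,u),c)) a b.
    - ctac Hs (dY::dY::nil) (fun u v : R => ((v,u),c)) a b.
    - ctac Hs (dY::dY::dY::nil) (fun u v : R => ((v,u),c)) a b.
    - ctac Hs (dX::nil) (fun u v : R => ((v,u),c)) a b. }
  intros a b c Hn.
  assert (EN : norm3 b a c = norm3 a b c) by (unfold norm3; f_equal; ring).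
  try rewrite <- EN in Hn |- *.
  assert (Hp : 0 < norm3 b a c) by lra.
  split; [|split; [|split; [|split]]].
  - eapply Rle_trans; [apply (HK0 b a c Hn)|]. unfold Rdiv. apply Rmult_le_compat_r.
    left; apply Rinv_0_lt_compat; auto. unfold Kt; lra.
  - eapply Rle_trans; [apply (HK1 b a c Hn)|]. apply le_Kdiv; auto. unfold Kt; lra.
  - eapply Rle_trans; [apply (HK2 b a c Hn)|]. apply le_Kdiv; auto. unfold Kt; lra.
  - eapply Rle_trans; [apply (HK3 b a c Hn)|]. apply le_Kdiv; auto. unfold Kt; lra.
  - eapply Rle_trans; [apply (HK4 b a c Hn)|]. apply le_Kdiv; auto. unfold Kt; lra.
Qed.

Lemma GH_P3 (f : R -> R -> R -> R) : normal3 f -> exists K,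
  GH (fun a b c => f a c b) (fun a b c => pd3 dX f a c b) (fun a b c => pd3 dX (pd3 dX f) a c b)
     (fun a b c => pd3 dX (pd3 dX (pd3 dX f)) a c b) (fun a b c => pd3 dZ f a c b) K.
Proof.
  intros [Hs [_ [_ [_ [[K0 HK0] [Hm _]]]]]].
  destruct (Hm 1%nat 0%nat 0%nat ltac:(lia)) as [K1 HK1].
  destruct (Hm 2%nat 0%nat 0%nat ltac:(lia)) as [K2 HK2].
  destruct (Hm 3%nat 0%nat 0%nat ltac:(lia)) as [K3 HK3].
  destruct (Hm 0%nat 0%nat 1%nat ltac:(lia)) as [K4 HK4].
  set (Kt := Rabs K0 + Rabs K1 + Rabs K2 + Rabs K3 + Rabs K4).
  assert (A0 := Rabs_pos K0). assert (A1 := Rabs_pos K1). assert (A2 := Rabs_pos K2).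
  assert (A3 := Rabs_pos K3). assert (A4 := Rabs_pos K4).
  assert (B0 := Rle_abs K0). assert (B1 := Rle_abs K1). assert (B2 := Rle_abs K2).
  assert (B3 := Rle_abs K3). assert (B4 := Rle_abs K4).
  exists Kt. split; [unfold Kt; lra|].
  split; [intros a b c; apply Derive_correct; exact (proj1 (Hs nil) dX a c b)|].
  split; [intros a b c; apply Derive_correct; exact (proj1 (Hs (dX::nil)) dX a c b)|].
  split; [intros a b c; apply Derive_correct; exact (proj1 (Hs (dX::dX::nil)) dX a c b)|].
  split; [intros a b c; apply Derive_correct; exact (proj1 (Hs nil) dZ a c b)|].
  split.
  { intros c a b. split; [|split; [|split; [|split]]].
    - ctac Hs (@nil dir3) (fun u v : R => ((u,c),v)) a b.
    - ctac Hs (dX::nil) (fun u v : R => ((u,c),v)) a b.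
    - ctac Hs (dX::dX::nil) (fun u v : R => ((u,c),v)) a b.
    - ctac Hs (dX::dX::dX::nil) (fun u v : R => ((u,c),v)) a b.
    - ctac Hs (dZ::nil) (fun u v : R => ((u,c),v)) a b. }
  intros a b c Hn.
  assert (EN : norm3 a c b = norm3 a b c) by (unfold norm3; f_equal; ring).
  try rewrite <- EN in Hn |- *.
  assert (Hp : 0 < norm3 a c b) by lra.
  split; [|split; [|split; [|split]]].
  - eapply Rle_trans; [apply (HK0 a c b Hn)|]. unfold Rdiv. apply Rmult_le_compat_r.
    left; apply Rinv_0_lt_compat; auto. unfold Kt; lra.
  - eapply Rle_trans; [apply (HK1 a c b Hn)|]. apply le_Kdiv; auto. unfold Kt; lra.
  - eapply Rle_trans; [apply (HK2 a c b Hn)|]. apply le_Kdiv; auto. unfold Kt; lra.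
  - eapply Rle_trans; [apply (HK3 a c b Hn)|]. apply le_Kdiv; auto. unfold Kt; lra.
  - eapply Rle_trans; [apply (HK4 a c b Hn)|]. apply le_Kdiv; auto. unfold Kt; lra.
Qed.

Lemma GH_P4 (f : R -> R -> R -> R) : normal3 f -> exists K,
  GH (fun a b c => f b c a) (fun a b c => pd3 dZ f b c a) (fun a b c => pd3 dZ (pd3 dZ f) b c a)
     (fun a b c => pd3 dZ (pd3 dZ (pd3 dZ f)) b c a) (fun a b c => pd3 dX f b c a) K.
Proof.
  intros [Hs [_ [_ [_ [[K0 HK0] [Hm _]]]]]].
  destruct (Hm 0%nat 0%nat 1%nat ltac:(lia)) as [K1 HK1].
  destruct (Hm 0%nat 0%nat 2%nat ltac:(lia)) as [K2 HK2].
  destruct (Hm 0%nat 0%nat 3%nat ltac:(lia)) as [K3 HK3].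
  destruct (Hm 1%nat 0%nat 0%nat ltac:(lia)) as [K4 HK4].
  set (Kt := Rabs K0 + Rabs K1 + Rabs K2 + Rabs K3 + Rabs K4).
  assert (A0 := Rabs_pos K0). assert (A1 := Rabs_pos K1). assert (A2 := Rabs_pos K2).
  assert (A3 := Rabs_pos K3). assert (A4 := Rabs_pos K4).
  assert (B0 := Rle_abs K0). assert (B1 := Rle_abs K1). assert (B2 := Rle_abs K2).
  assert (B3 := Rle_abs K3). assert (B4 := Rle_abs K4).
  exists Kt. split; [unfold Kt; lra|].
  split; [intros a b c; apply Derive_correct; exact (proj1 (Hs nil) dZ b c a)|].
  split; [intros a b c; apply Derive_correct; exact (proj1 (Hs (dZ::nil)) dZ b c a)|].
  split; [intros a b c; apply Derive_correct; exact (proj1 (Hs (dZ::dZ::nil)) dZ b c a)|].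
  split; [intros a b c; apply Derive_correct; exact (proj1 (Hs nil) dX b c a)|].
  split.
  { intros c a b. split; [|split; [|split; [|split]]].
    - ctac Hs (@nil dir3) (fun u v : R => ((v,c),u)) a b.
    - ctac Hs (dZ::nil) (fun u v : R => ((v,c),u)) a b.
    - ctac Hs (dZ::dZ::nil) (fun u v : R => ((v,c),u)) a b.
    - ctac Hs (dZ::dZ::dZ::nil) (fun u v : R => ((v,c),u)) a b.
    - ctac Hs (dX::nil) (fun u v : R => ((v,c),u)) a b. }
  intros a b c Hn.
  assert (EN : norm3 b c a = norm3 a b c) by (unfold norm3; f_equal; ring).
  try rewrite <- EN in Hn |- *.
  assert (Hp : 0 < norm3 b c a) by lra.
  split; [|split; [|split; [|split]]].
  - eapply Rle_trans; [apply (HK0 b c a Hn)|]. unfold Rdiv. apply Rmult_le_compat_r.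
    left; apply Rinv_0_lt_compat; auto. unfold Kt; lra.
  - eapply Rle_trans; [apply (HK1 b c a Hn)|]. apply le_Kdiv; auto. unfold Kt; lra.
  - eapply Rle_trans; [apply (HK2 b c a Hn)|]. apply le_Kdiv; auto. unfold Kt; lra.
  - eapply Rle_trans; [apply (HK3 b c a Hn)|]. apply le_Kdiv; auto. unfold Kt; lra.
  - eapply Rle_trans; [apply (HK4 b c a Hn)|]. apply le_Kdiv; auto. unfold Kt; lra.
Qed.

Lemma GH_P5 (f : R -> R -> R -> R) : normal3 f -> exists K,
  GH (fun a b c => f c a b) (fun a b c => pd3 dY f c a b) (fun a b c => pd3 dY (pd3 dY f) c a b)
     (fun a b c => pd3 dY (pd3 dY (pd3 dY f)) c a b) (fun a b c => pd3 dZ f c a b) K.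
Proof.
  intros [Hs [_ [_ [_ [[K0 HK0] [Hm _]]]]]].
  destruct (Hm 0%nat 1%nat 0%nat ltac:(lia)) as [K1 HK1].
  destruct (Hm 0%nat 2%nat 0%nat ltac:(lia)) as [K2 HK2].
  destruct (Hm 0%nat 3%nat 0%nat ltac:(lia)) as [K3 HK3].
  destruct (Hm 0%nat 0%nat 1%nat ltac:(lia)) as [K4 HK4].
  set (Kt := Rabs K0 + Rabs K1 + Rabs K2 + Rabs K3 + Rabs K4).
  assert (A0 := Rabs_pos K0). assert (A1 := Rabs_pos K1). assert (A2 := Rabs_pos K2).
  assert (A3 := Rabs_pos K3). assert (A4 := Rabs_pos K4).
  assert (B0 := Rle_abs K0). assert (B1 := Rle_abs K1). assert (B2 := Rle_abs K2).
  assert (B3 := Rle_abs K3). assert (B4 := Rle_abs K4).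
  exists Kt. split; [unfold Kt; lra|].
  split; [intros a b c; apply Derive_correct; exact (proj1 (Hs nil) dY c a b)|].
  split; [intros a b c; apply Derive_correct; exact (proj1 (Hs (dY::nil)) dY c a b)|].
  split; [intros a b c; apply Derive_correct; exact (proj1 (Hs (dY::dY::nil)) dY c a b)|].
  split; [intros a b c; apply Derive_correct; exact (proj1 (Hs nil) dZ c a b)|].
  split.
  { intros c a b. split; [|split; [|split; [|split]]].
    - ctac Hs (@nil dir3) (fun u v : R => ((c,u),v)) a b.
    - ctac Hs (dY::nil) (fun u v : R => ((c,u),v)) a b.
    - ctac Hs (dY::dY::nil) (fun u v : R => ((c,u),v)) a b.
    - ctac Hs (dY::dY::dY::nil) (fun u v : R => ((c,u),v)) a b.
    - ctac Hs (dZ::nil) (fun u v : R => ((c,u),v)) a b. }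
  intros a b c Hn.
  assert (EN : norm3 c a b = norm3 a b c) by (unfold norm3; f_equal; ring).
  try rewrite <- EN in Hn |- *.
  assert (Hp : 0 < norm3 c a b) by lra.
  split; [|split; [|split; [|split]]].
  - eapply Rle_trans; [apply (HK0 c a b Hn)|]. unfold Rdiv. apply Rmult_le_compat_r.
    left; apply Rinv_0_lt_compat; auto. unfold Kt; lra.
  - eapply Rle_trans; [apply (HK1 c a b Hn)|]. apply le_Kdiv; auto. unfold Kt; lra.
  - eapply Rle_trans; [apply (HK2 c a b Hn)|]. apply le_Kdiv; auto. unfold Kt; lra.
  - eapply Rle_trans; [apply (HK3 c a b Hn)|]. apply le_Kdiv; auto. unfold Kt; lra.
  - eapply Rle_trans; [apply (HK4 c a b Hn)|]. apply le_Kdiv; auto. unfold Kt; lra.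
Qed.

Lemma GH_P6 (f : R -> R -> R -> R) : normal3 f -> exists K,
  GH (fun a b c => f c b a) (fun a b c => pd3 dZ f c b a) (fun a b c => pd3 dZ (pd3 dZ f) c b a)
     (fun a b c => pd3 dZ (pd3 dZ (pd3 dZ f)) c b a) (fun a b c => pd3 dY f c b a) K.
Proof.
  intros [Hs [_ [_ [_ [[K0 HK0] [Hm _]]]]]].
  destruct (Hm 0%nat 0%nat 1%nat ltac:(lia)) as [K1 HK1].
  destruct (Hm 0%nat 0%nat 2%nat ltac:(lia)) as [K2 HK2].
  destruct (Hm 0%nat 0%nat 3%nat ltac:(lia)) as [K3 HK3].
  destruct (Hm 0%nat 1%nat 0%nat ltac:(lia)) as [K4 HK4].
  set (Kt := Rabs K0 + Rabs K1 + Rabs K2 + Rabs K3 + Rabs K4).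
  assert (A0 := Rabs_pos K0). assert (A1 := Rabs_pos K1). assert (A2 := Rabs_pos K2).
  assert (A3 := Rabs_pos K3). assert (A4 := Rabs_pos K4).
  assert (B0 := Rle_abs K0). assert (B1 := Rle_abs K1). assert (B2 := Rle_abs K2).
  assert (B3 := Rle_abs K3). assert (B4 := Rle_abs K4).
  exists Kt. split; [unfold Kt; lra|].
  split; [intros a b c; apply Derive_correct; exact (proj1 (Hs nil) dZ c b a)|].
  split; [intros a b c; apply Derive_correct; exact (proj1 (Hs (dZ::nil)) dZ c b a)|].
  split; [intros a b c; apply Derive_correct; exact (proj1 (Hs (dZ::dZ::nil)) dZ c b a)|].
  split; [intros a b c; apply Derive_correct; exact (proj1 (Hs nil) dY c b a)|].
  split.
  { intros c a b. split; [|split; [|split; [|split]]].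
    - ctac Hs (@nil dir3) (fun u v : R => ((c,v),u)) a b.
    - ctac Hs (dZ::nil) (fun u v : R => ((c,v),u)) a b.
    - ctac Hs (dZ::dZ::nil) (fun u v : R => ((c,v),u)) a b.
    - ctac Hs (dZ::dZ::dZ::nil) (fun u v : R => ((c,v),u)) a b.
    - ctac Hs (dY::nil) (fun u v : R => ((c,v),u)) a b. }
  intros a b c Hn.
  assert (EN : norm3 c b a = norm3 a b c) by (unfold norm3; f_equal; ring).
  try rewrite <- EN in Hn |- *.
  assert (Hp : 0 < norm3 c b a) by lra.
  split; [|split; [|split; [|split]]].
  - eapply Rle_trans; [apply (HK0 c b a Hn)|]. unfold Rdiv. apply Rmult_le_compat_r.
    left; apply Rinv_0_lt_compat; auto. unfold Kt; lra.
  - eapply Rle_trans; [apply (HK1 c b a Hn)|]. apply le_Kdiv; auto. unfold Kt; lra.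
  - eapply Rle_trans; [apply (HK2 c b a Hn)|]. apply le_Kdiv; auto. unfold Kt; lra.
  - eapply Rle_trans; [apply (HK3 c b a Hn)|]. apply le_Kdiv; auto. unfold Kt; lra.
  - eapply Rle_trans; [apply (HK4 c b a Hn)|]. apply le_Kdiv; auto. unfold Kt; lra.
Qed.


Definition TT (g : R -> R -> R -> R) (k b c : R) : C :=
  epsilon (inhabits (RtoC 0)) (fun l => sym_lim (FE (fun t => g t b c) k) l).

Lemma TT_spec g gx gxx gxxx gy K k b c : GH g gx gxx gxxx gy K -> k <> 0 ->
  sym_lim (FE (fun t => g t b c) k) (TT g k b c).
Proof.
  intros HG Hk. unfold TT. apply epsilon_spec. apply (GH_A_exists _ _ _ _ _ _ HG); auto.
Qed.

Lemma sym_lim2_unique h l1 l2 : sym_lim2 h l1 -> sym_lim2 h l2 -> l1 = l2.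
Proof.
  intros H1 H2. apply (@filterlim_locally_unique (R * R) R_AbsRing CV (filter_prod (Rbar_locally p_infty) (Rbar_locally p_infty)) _ _ _ _ H1 H2).
Qed.

Lemma sym_lim2_eps h l : sym_lim2 h l -> sym_lim2 h (epsilon (inhabits (RtoC 0)) (fun l => sym_lim2 h l)).
Proof. intro H. apply epsilon_spec. eauto. Qed.

Lemma modC2_of g gx gxx gxxx gy K k : GH g gx gxx gxxx gy K -> k <> 0 ->
  moderate_decreaseC2 3 (fun b c => TT g k b c).
Proof.
  intros HG Hk. exists (K * PI / Rabs k ^ 3). intros u v Hn.
  eapply Rle_trans. apply (GH_A_bound _ _ _ _ _ _ HG k u v); auto. apply TT_spec with (1 := HG); auto.
  assert (0 < Rabs k ^ 3) by (apply pow_lt, Rabs_pos_lt; auto).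
  assert (0 < norm2 u v ^ 3) by (apply pow_lt; lra).
  assert (0 < Rabs k) by (apply Rabs_pos_lt; auto). right. field. split; intro; lra.
Qed.

Lemma modC1_of (F0 : R -> C) K k1 : k1 <> 0 ->
  (forall c, 1 < Rabs c -> Cmod (F0 c) <= K * PI / (Rabs k1 ^ 3 * Rabs c) * PI / Rabs c) ->
  moderate_decreaseC1 F0.
Proof.
  intros Hk H. exists (K * PI * PI / Rabs k1 ^ 3). intros t Ht.
  eapply Rle_trans. apply H; auto.
  assert (0 < Rabs k1 ^ 3) by (apply pow_lt, Rabs_pos_lt; auto).
  assert (0 < Rabs k1) by (apply Rabs_pos_lt; auto). rewrite <- (pow2_abs t). right. field. split; intro; lra.
Qed.


Theorem lemma16 (f : R -> R -> R -> R) (Hf : normal3 f) :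
  exists A B Cc F G H : R -> R -> R -> C,
  forall k1 k2 k3 : R, k1 <> 0 -> k2 <> 0 -> k3 <> 0 ->
  (* (a) *)
  (forall y z, sym_lim (fun x => Cmult (RtoC (f x y z)) (cexpi (- (k1 * x)))) (A k1 y z)) /\
  (forall x z, sym_lim (fun y => Cmult (RtoC (f x y z)) (cexpi (- (k2 * y)))) (B x k2 z)) /\
  (forall x y, sym_lim (fun z => Cmult (RtoC (f x y z)) (cexpi (- (k3 * z)))) (Cc x y k3)) /\
  moderate_decreaseC2 3 (fun y z => A k1 y z) /\
  moderate_decreaseC2 3 (fun x z => B x k2 z) /\
  moderate_decreaseC2 3 (fun x y => Cc x y k3) /\
  (* (b) *)
  (forall z, sym_lim2 (fun x y =>
     Cmult (Cmult (RtoC (f x y z)) (cexpi (- (k1 * x)))) (cexpi (- (k2 * y)))) (F k1 k2 z)) /\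
  (forall y, sym_lim2 (fun x z =>
     Cmult (Cmult (RtoC (f x y z)) (cexpi (- (k1 * x)))) (cexpi (- (k3 * z)))) (G k1 y k3)) /\
  (forall x, sym_lim2 (fun y z =>
     Cmult (Cmult (RtoC (f x y z)) (cexpi (- (k2 * y)))) (cexpi (- (k3 * z)))) (H x k2 k3)) /\
  moderate_decreaseC1 (fun z => F k1 k2 z) /\
  moderate_decreaseC1 (fun y => G k1 y k3) /\
  moderate_decreaseC1 (fun x => H x k2 k3) /\
  (* (c) *)
  (forall z, improper_int (fun y => Cmult (A k1 y z) (cexpi (- (k2 * y)))) (F k1 k2 z)) /\
  (forall z, improper_int (fun x => Cmult (B x k2 z) (cexpi (- (k1 * x)))) (F k1 k2 z)) /\
  (forall y, improper_int (fun z => Cmult (A k1 y z) (cexpi (- (k3 * z)))) (G k1 y k3)) /\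
  (forall y, improper_int (fun x => Cmult (Cc x y k3) (cexpi (- (k1 * x)))) (G k1 y k3)) /\
  (forall x, improper_int (fun z => Cmult (B x k2 z) (cexpi (- (k3 * z)))) (H x k2 k3)) /\
  (forall x, improper_int (fun y => Cmult (Cc x y k3) (cexpi (- (k2 * y)))) (H x k2 k3)).
Proof.
  destruct (GH_P1 f Hf) as [K1 G1]. destruct (GH_P2 f Hf) as [K2 G2].
  destruct (GH_P3 f Hf) as [K3 G3]. destruct (GH_P4 f Hf) as [K4 G4].
  destruct (GH_P5 f Hf) as [K5 G5]. destruct (GH_P6 f Hf) as [K6 G6].
  set (A := fun k b c => TT (fun a b c => f a b c) k b c).
  set (B := fun x k z => TT (fun a b c => f b a c) k x z).
  set (Cc := fun x y k => TT (fun a b c => f b c a) k x y).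
  exists A, B, Cc,
    (fun k1 k2 z => epsilon (inhabits (RtoC 0)) (fun l => sym_lim2 (fun x y =>
        Cmult (Cmult (RtoC (f x y z)) (cexpi (- (k1 * x)))) (cexpi (- (k2 * y)))) l)),
    (fun k1 y k3 => epsilon (inhabits (RtoC 0)) (fun l => sym_lim2 (fun x z =>
        Cmult (Cmult (RtoC (f x y z)) (cexpi (- (k1 * x)))) (cexpi (- (k3 * z)))) l)),
    (fun x k2 k3 => epsilon (inhabits (RtoC 0)) (fun l => sym_lim2 (fun y z =>
        Cmult (Cmult (RtoC (f x y z)) (cexpi (- (k2 * y)))) (cexpi (- (k3 * z)))) l)).
  intros k1 k2 k3 Hk1 Hk2 Hk3.
  assert (SA : forall k y z, k <> 0 -> sym_lim (FE (fun t => f t y z) k) (A k y z)).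
  { intros k y z Hk. apply (TT_spec _ _ _ _ _ _ k y z G1 Hk). }
  assert (SB : forall k x z, k <> 0 -> sym_lim (FE (fun t => f x t z) k) (B x k z)).
  { intros k x z Hk. apply (TT_spec _ _ _ _ _ _ k x z G2 Hk). }
  assert (SC : forall k x y, k <> 0 -> sym_lim (FE (fun t => f x y t) k) (Cc x y k)).
  { intros k x y Hk. apply (TT_spec _ _ _ _ _ _ k x y G4 Hk). }
  assert (M1 := fun z => Main2D_final _ _ _ _ _ _ G1 k1 k2 z Hk1 Hk2 (fun y => A k1 y z) (fun y => SA k1 y z Hk1)).
  assert (M2 := fun z => Main2D_final _ _ _ _ _ _ G2 k2 k1 z Hk2 Hk1 (fun x => B x k2 z) (fun x => SB k2 x z Hk2)).
  assert (M3 := fun y => Main2D_final _ _ _ _ _ _ G3 k1 k3 y Hk1 Hk3 (fun z => A k1 y z) (fun z => SA k1 y z Hk1)).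
  assert (M4 := fun y => Main2D_final _ _ _ _ _ _ G4 k3 k1 y Hk3 Hk1 (fun x => Cc x y k3) (fun x => SC k3 x y Hk3)).
  assert (M5 := fun x => Main2D_final _ _ _ _ _ _ G5 k2 k3 x Hk2 Hk3 (fun z => B x k2 z) (fun z => SB k2 x z Hk2)).
  assert (M6 := fun x => Main2D_final _ _ _ _ _ _ G6 k3 k2 x Hk3 Hk2 (fun y => Cc x y k3) (fun y => SC k3 x y Hk3)).
  assert (PF : forall z, sym_lim2 (fun x y =>
        Cmult (Cmult (RtoC (f x y z)) (cexpi (- (k1 * x)))) (cexpi (- (k2 * y))))
      (epsilon (inhabits (RtoC 0)) (fun l => sym_lim2 (fun x y =>
        Cmult (Cmult (RtoC (f x y z)) (cexpi (- (k1 * x)))) (cexpi (- (k2 * y)))) l)) /\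
     improper_int (fun y => Cmult (A k1 y z) (cexpi (- (k2 * y))))
      (epsilon (inhabits (RtoC 0)) (fun l => sym_lim2 (fun x y =>
        Cmult (Cmult (RtoC (f x y z)) (cexpi (- (k1 * x)))) (cexpi (- (k2 * y)))) l)) /\
     improper_int (fun x => Cmult (B x k2 z) (cexpi (- (k1 * x))))
      (epsilon (inhabits (RtoC 0)) (fun l => sym_lim2 (fun x y =>
        Cmult (Cmult (RtoC (f x y z)) (cexpi (- (k1 * x)))) (cexpi (- (k2 * y)))) l)) /\
     (1 < Rabs z -> Cmod (epsilon (inhabits (RtoC 0)) (fun l => sym_lim2 (fun x y =>
        Cmult (Cmult (RtoC (f x y z)) (cexpi (- (k1 * x)))) (cexpi (- (k2 * y)))) l))
        <= K1 * PI / (Rabs k1 ^ 3 * Rabs z) * PI / Rabs z)).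
  { intro z. destruct (M1 z) as [F0 [HS1 [HI1 HB1]]]. destruct (M2 z) as [F0' [HS2 [HI2 _]]].
    pose proof (sym_lim2_eps _ _ HS1) as HE.
    rewrite <- (sym_lim2_unique _ _ _ HS1 HE).
    assert (Hsw : F0 = F0').
    { eapply swap_lim2; [exact (C2_FE2 (fun u v => f u v z) k1 k2 (fun a b => proj1 (GH_c _ _ _ _ _ _ G1 z a b))) | | exact HS1 | exact HS2]. intros a b; unfold E; ring. }
    split; [exact HS1|]. split; [exact HI1|]. split; [rewrite Hsw; exact HI2|]. exact HB1. }
  assert (PG : forall y, sym_lim2 (fun x z =>
        Cmult (Cmult (RtoC (f x y z)) (cexpi (- (k1 * x)))) (cexpi (- (k3 * z))))
      (epsilon (inhabits (RtoC 0)) (fun l => sym_lim2 (fun x z =>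
        Cmult (Cmult (RtoC (f x y z)) (cexpi (- (k1 * x)))) (cexpi (- (k3 * z)))) l)) /\
     improper_int (fun z => Cmult (A k1 y z) (cexpi (- (k3 * z))))
      (epsilon (inhabits (RtoC 0)) (fun l => sym_lim2 (fun x z =>
        Cmult (Cmult (RtoC (f x y z)) (cexpi (- (k1 * x)))) (cexpi (- (k3 * z)))) l)) /\
     improper_int (fun x => Cmult (Cc x y k3) (cexpi (- (k1 * x))))
      (epsilon (inhabits (RtoC 0)) (fun l => sym_lim2 (fun x z =>
        Cmult (Cmult (RtoC (f x y z)) (cexpi (- (k1 * x)))) (cexpi (- (k3 * z)))) l)) /\
     (1 < Rabs y -> Cmod (epsilon (inhabits (RtoC 0)) (fun l => sym_lim2 (fun x z =>
        Cmult (Cmult (RtoC (f x y z)) (cexpi (- (k1 * x)))) (cexpi (- (k3 * z)))) l))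
        <= K3 * PI / (Rabs k1 ^ 3 * Rabs y) * PI / Rabs y)).
  { intro y. destruct (M3 y) as [F0 [HS1 [HI1 HB1]]]. destruct (M4 y) as [F0' [HS2 [HI2 _]]].
    pose proof (sym_lim2_eps _ _ HS1) as HE.
    rewrite <- (sym_lim2_unique _ _ _ HS1 HE).
    assert (Hsw : F0 = F0').
    { eapply swap_lim2; [exact (C2_FE2 (fun u v => f u y v) k1 k3 (fun a b => proj1 (GH_c _ _ _ _ _ _ G3 y a b))) | | exact HS1 | exact HS2]. intros a b; unfold E; ring. }
    split; [exact HS1|]. split; [exact HI1|]. split; [rewrite Hsw; exact HI2|]. exact HB1. }
  assert (PH : forall x, sym_lim2 (fun y z =>
        Cmult (Cmult (RtoC (f x y z)) (cexpi (- (k2 * y)))) (cexpi (- (k3 * z))))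
      (epsilon (inhabits (RtoC 0)) (fun l => sym_lim2 (fun y z =>
        Cmult (Cmult (RtoC (f x y z)) (cexpi (- (k2 * y)))) (cexpi (- (k3 * z)))) l)) /\
     improper_int (fun z => Cmult (B x k2 z) (cexpi (- (k3 * z))))
      (epsilon (inhabits (RtoC 0)) (fun l => sym_lim2 (fun y z =>
        Cmult (Cmult (RtoC (f x y z)) (cexpi (- (k2 * y)))) (cexpi (- (k3 * z)))) l)) /\
     improper_int (fun y => Cmult (Cc x y k3) (cexpi (- (k2 * y))))
      (epsilon (inhabits (RtoC 0)) (fun l => sym_lim2 (fun y z =>
        Cmult (Cmult (RtoC (f x y z)) (cexpi (- (k2 * y)))) (cexpi (- (k3 * z)))) l)) /\
     (1 < Rabs x -> Cmod (epsilon (inhabits (RtoC 0)) (fun l => sym_lim2 (fun y z =>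
        Cmult (Cmult (RtoC (f x y z)) (cexpi (- (k2 * y)))) (cexpi (- (k3 * z)))) l))
        <= K5 * PI / (Rabs k2 ^ 3 * Rabs x) * PI / Rabs x)).
  { intro x. destruct (M5 x) as [F0 [HS1 [HI1 HB1]]]. destruct (M6 x) as [F0' [HS2 [HI2 _]]].
    pose proof (sym_lim2_eps _ _ HS1) as HE.
    rewrite <- (sym_lim2_unique _ _ _ HS1 HE).
    assert (Hsw : F0 = F0').
    { eapply swap_lim2; [exact (C2_FE2 (fun u v => f x u v) k2 k3 (fun a b => proj1 (GH_c _ _ _ _ _ _ G5 x a b))) | | exact HS1 | exact HS2]. intros a b; unfold E; ring. }
    split; [exact HS1|]. split; [exact HI1|]. split; [rewrite Hsw; exact HI2|]. exact HB1. }
  split; [intros y z; apply SA; auto|].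
  split; [intros x z; apply SB; auto|].
  split; [intros x y; apply SC; auto|].
  split; [apply (modC2_of _ _ _ _ _ _ k1 G1 Hk1)|].
  split; [apply (modC2_of _ _ _ _ _ _ k2 G2 Hk2)|].
  split; [apply (modC2_of _ _ _ _ _ _ k3 G4 Hk3)|].
  split; [intro z; exact (proj1 (PF z))|].
  split; [intro y; exact (proj1 (PG y))|].
  split; [intro x; exact (proj1 (PH x))|].
  split; [apply (modC1_of _ K1 k1 Hk1); intros c Hc; exact (proj2 (proj2 (proj2 (PF c))) Hc)|].
  split; [apply (modC1_of _ K3 k1 Hk1); intros c Hc; exact (proj2 (proj2 (proj2 (PG c))) Hc)|].
  split; [apply (modC1_of _ K5 k2 Hk2); intros c Hc; exact (proj2 (proj2 (proj2 (PH c))) Hc)|].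
  split; [intro z; exact (proj1 (proj2 (PF z)))|].
  split; [intro z; exact (proj1 (proj2 (proj2 (PF z))))|].
  split; [intro y; exact (proj1 (proj2 (PG y)))|].
  split; [intro y; exact (proj1 (proj2 (proj2 (PG y))))|].
  split; [intro x; exact (proj1 (proj2 (PH x)))|].
  intro x; exact (proj1 (proj2 (proj2 (PH x)))).
Qed.
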